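(* Suppose $\sigma^2>0=\lambda(\mathbb R)$ and let $q>0$. Then: (i) there exist $A_0,h_0\in(0,\infty)$ such that for all $h\in(0,h_0)$ and all $x\in\mathbb Z_h^{++}$ with $xh^2\le1$: $|\Delta^{(q)}_Z(x,h)|\le A_0\bigl[h^2(1+x)e^{\alpha_+x}+h(e^{\alpha_+x}-e^{\alpha_-x})\bigr]$; (ii) for any nested sequence $h_n\downarrow0$ ($h_n/h_{n+1}\in\mathbb N$) and any $x\in\bigcup_n\mathbb Z_{h_n}^{++}$, $$\lim_{n\to\infty}\frac{\Delta^{(q)}_Z(x,h_n)}{h_n}=-\frac12\frac{q}{\sqrt{\mu^2+2\sigma^2q}}\bigl(e^{\alpha_+x}-e^{\alpha_-x}\bigr),$$ where $\alpha_\pm=\frac{-\mu\pm\sqrt{\mu^2+2q\sigma^2}}{\sigma^2}$.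
   Context: $X$ is the Lévy process $\sigma B_t+\mu t$ ($B$ standard Brownian motion, $\sigma^2>0$), with $\psi(\beta)=\tfrac12\sigma^2\beta^2+\mu\beta$, and $\psi^h(\beta)=\mu\frac{e^{\beta h}-e^{-\beta h}}{2h}+\sigma^2\frac{e^{\beta h}+e^{-\beta h}-2}{2h^2}$. For $h>0$, $\mathbb Z_h=h\mathbb Z$, $\mathbb Z_h^{++}=\mathbb Z_h\cap(0,\infty)$; $h_\star>0$ is such that for $h\in(0,h_\star)$, $\psi^h$ is the Laplace exponent of a compound Poisson process on $\mathbb Z_h$. $\Phi(q),\Phi^h(q)$: largest roots of $\psi=q$, $\psi^h=q$ on $[0,\infty)$. $W^{(q)}$ vanishes on $(-\infty,0)$, is continuous nondecreasing on $[0,\infty)$ with Laplace transform $1/(\psi(\beta)-q)$ ($\beta>\Phi(q)$), and $Z^{(q)}(x)=1+q\int_0^xW^{(q)}(y)dy$. $W^{(q)}_h$ vanishes on $(-\infty,0)$ and on $[0,\infty)$ is the unique right-continuous function constant on each $[kh,(k+1)h)$, of exponential order, with Laplace transform $\frac{e^{\beta h}-1}{\beta h(\psi^h(\beta)-q)}$ ($\beta>\Phi^h(q)$), and $Z^{(q)}_h(x)=1+q\int_0^{\lfloor x/h\rfloor h}W^{(q)}_h(y)dy$. $\Delta^{(q)}_Z(x,h):=Z^{(q)}(x)-Z^{(q)}_h(x)$. *)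

(* Defs.v *)
From Stdlib Require Import Reals Lra ClassicalEpsilon.
Open Scope R_scope.

(* Laplace exponent of X = sigma B + mu t, with sigma2 = sigma^2. *)
Definition psi (sigma2 mu b : R) : R := / 2 * sigma2 * b ^ 2 + mu * b.

(* Laplace exponent of the approximating compound Poisson process on hZ. *)
Definition psih (sigma2 mu h b : R) : R :=
  mu * (exp (b * h) - exp (- (b * h))) / (2 * h)
  + sigma2 * (exp (b * h) + exp (- (b * h)) - 2) / (2 * h ^ 2).

(* Total Riemann integral: the value of RiemannInt when f is Riemann
   integrable on [a,b] (RiemannInt is proof-irrelevant), chosen by epsilon. *)
Definition Rint (f : R -> R) (a b : R) : R :=
  epsilon (inhabits 0)
    (fun I => exists pr : Riemann_integrable f a b, RiemannInt pr = I).

Definition largest_root (f : R -> R) (q Phi : R) : Prop :=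
  0 <= Phi /\ f Phi = q /\ (forall b, 0 <= b -> f b = q -> b <= Phi).

Definition laplace_is (f : R -> R) (beta L : R) : Prop :=
  (forall T, 0 <= T -> inhabited (Riemann_integrable (fun y => exp (- (beta * y)) * f y) 0 T)) /\
  (forall eps, 0 < eps -> exists T0, forall T, T0 <= T ->
     Rabs (Rint (fun y => exp (- (beta * y)) * f y) 0 T - L) < eps).

Definition is_scale_W (sigma2 mu q : R) (W : R -> R) : Prop :=
  (forall x, x < 0 -> W x = 0) /\
  (forall x, 0 <= x -> forall eps, 0 < eps -> exists delta, 0 < delta /\
     forall y, 0 <= y -> Rabs (y - x) < delta -> Rabs (W y - W x) < eps) /\
  (forall x y, 0 <= x -> x <= y -> W x <= W y) /\
  (exists Phi, largest_root (psi sigma2 mu) q Phi /\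
     forall beta, Phi < beta -> laplace_is W beta (/ (psi sigma2 mu beta - q))).

Definition is_scale_Wh (sigma2 mu q h : R) (Wh : R -> R) : Prop :=
  (forall x, x < 0 -> Wh x = 0) /\
  (forall (k : nat) x, INR k * h <= x < (INR k + 1) * h -> Wh x = Wh (INR k * h)) /\
  (exists C c, forall x, 0 <= x -> Rabs (Wh x) <= C * exp (c * x)) /\
  (exists Phih, largest_root (psih sigma2 mu h) q Phih /\
     forall beta, Phih < beta ->
       laplace_is Wh beta
         ((exp (beta * h) - 1) / (beta * h * (psih sigma2 mu h beta - q)))).

Definition Zq (q : R) (W : R -> R) (x : R) : R := 1 + q * Rint W 0 x.

Definition Zqh (q h : R) (Wh : R -> R) (x : R) : R :=
  1 + q * Rint Wh 0 (IZR (Int_part (x / h)) * h).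

Definition DeltaZ (q : R) (W Wh : R -> R) (x h : R) : R :=
  Zq q W x - Zqh q h Wh x.

Definition alpha_plus (sigma2 mu q : R) : R :=
  (- mu + sqrt (mu ^ 2 + 2 * q * sigma2)) / sigma2.
Definition alpha_minus (sigma2 mu q : R) : R :=
  (- mu - sqrt (mu ^ 2 + 2 * q * sigma2)) / sigma2.

(* Main.v *)
Require Import Defs.
From Stdlib Require Import Reals Lra Lia ZArith ClassicalEpsilon.
From Coquelicot Require Import Coquelicot.
Open Scope R_scope.

Lemma Rint_RInt f a b : ex_RInt f a b -> Rint f a b = RInt f a b.
Proof.
  intro H. unfold Rint.
  set (P := fun I => exists pr : Riemann_integrable f a b, RiemannInt pr = I).
  assert (HP : exists I, P I).
  { exists (RiemannInt (ex_RInt_Reals_0 f a b H)). exists (ex_RInt_Reals_0 f a b H). reflexivity. }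
  destruct (epsilon_spec (inhabits 0) P HP) as [pr Hpr].
  rewrite <- Hpr. symmetry. apply RInt_Reals.
Qed.

Lemma Int_part_INR k : IZR (Int_part (INR k)) = INR k.
Proof.
  unfold Int_part. rewrite minus_IZR.
  assert (up (INR k) = (Z.of_nat k + 1)%Z).
  { symmetry. apply tech_up; rewrite plus_IZR, <- INR_IZR_INZ; simpl; lra. }
  rewrite H, plus_IZR, <- INR_IZR_INZ. simpl. lra.
Qed.

Definition C0 (g : R -> R) := forall y, continuous g y.

Lemma C0_const c : C0 (fun _ => c).
Proof. intro y. apply continuous_const. Qed.
Lemma C0_id : C0 (fun y => y).
Proof. intro y. apply continuous_id. Qed.
Lemma C0_plus f g : C0 f -> C0 g -> C0 (fun y => f y + g y).
Proof. intros Hf Hg y. exact (continuous_plus f g y (Hf y) (Hg y)). Qed.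
Lemma C0_mult f g : C0 f -> C0 g -> C0 (fun y => f y * g y).
Proof. intros Hf Hg y. exact (continuous_mult f g y (Hf y) (Hg y)). Qed.
Lemma C0_opp f : C0 f -> C0 (fun y => - f y).
Proof. intros Hf y. exact (continuous_opp f y (Hf y)). Qed.
Lemma C0_minus f g : C0 f -> C0 g -> C0 (fun y => f y - g y).
Proof. intros. apply C0_plus; auto. apply C0_opp; auto. Qed.
Lemma C0_exp f : C0 f -> C0 (fun y => exp (f y)).
Proof. intros Hf y. apply (continuous_comp f exp y (Hf y)).
  apply continuity_pt_filterlim. apply derivable_continuous_pt, derivable_pt_exp. Qed.
Lemma C0_pow f n : C0 f -> C0 (fun y => f y ^ n).
Proof. intros Hf. induction n; simpl. apply C0_const. apply C0_mult; auto. Qed.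
Lemma C0_ext f g : (forall y, f y = g y) -> C0 f -> C0 g.
Proof. intros H Hf y. apply (continuous_ext f g y H (Hf y)). Qed.

Lemma C0_ex g a b : C0 g -> ex_RInt g a b.
Proof. intros H. apply (ex_RInt_continuous (V:=R_CompleteNormedModule)). intros; apply H. Qed.

Lemma RInt_plusR f g a b : ex_RInt f a b -> ex_RInt g a b ->
  RInt (fun x => f x + g x) a b = RInt f a b + RInt g a b.
Proof. intros. exact (RInt_plus f g a b H H0). Qed.
Lemma RInt_minusR f g a b : ex_RInt f a b -> ex_RInt g a b ->
  RInt (fun x => f x - g x) a b = RInt f a b - RInt g a b.
Proof. intros. exact (RInt_minus f g a b H H0). Qed.
Lemma RInt_scalR f c a b : ex_RInt f a b ->
  RInt (fun x => c * f x) a b = c * RInt f a b.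
Proof. intros. exact (RInt_scal f a b c H). Qed.
Lemma RInt_ChaslesR f a b c : ex_RInt f a b -> ex_RInt f b c ->
  RInt f a b + RInt f b c = RInt f a c.
Proof. intros. exact (RInt_Chasles f a b c H H0). Qed.
Lemma RInt_constR c a b : RInt (fun _ => c) a b = (b - a) * c.
Proof. exact (RInt_const a b c). Qed.

Lemma RInt_abs_bound g G a b : a <= b -> C0 g -> C0 G ->
  (forall y, a <= y <= b -> Rabs (g y) <= G y) -> Rabs (RInt g a b) <= RInt G a b.
Proof.
  intros Hab Hg HG Hb.
  eapply Rle_trans. apply abs_RInt_le; auto. apply C0_ex; auto.
  apply RInt_le; auto.
  - apply C0_ex. intro y. apply (continuous_comp g Rabs y (Hg y)).
    apply continuity_pt_filterlim. apply Rcontinuity_abs.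
  - apply C0_ex; auto.
  - intros. apply Hb. lra.
Qed.

Lemma RInt_abs_const g M a b : a <= b -> C0 g ->
  (forall y, a <= y <= b -> Rabs (g y) <= M) -> Rabs (RInt g a b) <= (b - a) * M.
Proof.
  intros. rewrite <- RInt_constR. apply RInt_abs_bound; auto. apply C0_const.
Qed.

Lemma RInt_exp_neg a b : RInt (fun y => exp (- y)) a b = exp (- a) - exp (- b).
Proof.
  apply is_RInt_unique.
  assert (H := is_RInt_derive (fun y => - exp (- y)) (fun y => exp (- y)) a b).
  replace (exp (- a) - exp (- b)) with (minus (- exp (- b)) (- exp (- a))).
  2:{ unfold minus, plus, opp; simpl. ring. }
  apply H.
  - intros. auto_derive; auto. ring.
  - intros. apply (C0_exp (fun y => - y)). apply C0_opp, C0_id.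
Qed.

Lemma cont_from_epsdelta f x :
  (forall eps, 0 < eps -> exists delta, 0 < delta /\ forall y, Rabs (y - x) < delta -> Rabs (f y - f x) < eps) ->
  continuous f x.
Proof.
  intros H. apply continuity_pt_filterlim.
  intros eps Heps. destruct (H eps Heps) as [d [Hd Hy]].
  exists d. split; auto. intros y [_ Hy']. apply Hy. exact Hy'.
Qed.

Lemma exp_le x y : x <= y -> exp x <= exp y.
Proof. intros [H|H]. left; apply exp_increasing; auto. subst; lra. Qed.

Lemma RInt_extR (f g : R -> R) a b : (forall x, Rmin a b < x < Rmax a b -> f x = g x) -> RInt f a b = RInt g a b.
Proof. intros H. apply RInt_ext. exact H. Qed.

Ltac toR := match goal with |- @eq _ ?x ?y => change (@eq R x y) end.

Ltac c0 := repeat first [ assumption | apply C0_id | apply C0_const | apply C0_minus | apply C0_plus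
  | apply C0_mult | apply C0_opp | apply C0_exp | apply C0_pow ].
Ltac exR := apply C0_ex; c0.

Definition Zlap (g : R -> R) := forall eps, 0 < eps -> exists T0, forall T, T0 <= T -> Rabs (RInt g 0 T) < eps.

Lemma Zlap_ext g g' : (forall y, g y = g' y) -> Zlap g -> Zlap g'.
Proof.
  intros H Hg eps He. destruct (Hg eps He) as [T0 HT]. exists T0. intros T HT'.
  rewrite (RInt_ext g' g). apply HT; auto. intros; rewrite H; auto.
Qed.

Lemma Zlap_zero : Zlap (fun _ => 0).
Proof. intros eps He. exists 0. intros. rewrite RInt_constR, Rmult_0_r, Rabs_R0. auto. Qed.

Lemma Zlap_plus g1 g2 : C0 g1 -> C0 g2 -> Zlap g1 -> Zlap g2 -> Zlap (fun y => g1 y + g2 y).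
Proof.
  intros C1 C2 H1 H2 eps He.
  destruct (H1 (eps/2)) as [T1 HT1]. lra. destruct (H2 (eps/2)) as [T2 HT2]. lra.
  exists (Rmax T1 T2). intros T HT. rewrite RInt_plusR by (apply C0_ex; auto).
  eapply Rle_lt_trans. apply Rabs_triang.
  assert (A := HT1 T ltac:(eapply Rle_trans; [apply Rmax_l|exact HT])).
  assert (B := HT2 T ltac:(eapply Rle_trans; [apply Rmax_r|exact HT])). lra.
Qed.

Lemma Zlap_scal c g : C0 g -> Zlap g -> Zlap (fun y => c * g y).
Proof.
  intros Cg H eps He.
  destruct (H (eps / (Rabs c + 1))) as [T1 HT1].
  { apply Rdiv_lt_0_compat; auto. pose proof (Rabs_pos c); lra. }
  exists T1. intros T HT. rewrite RInt_scalR by (apply C0_ex; auto).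
  rewrite Rabs_mult. specialize (HT1 T HT).
  pose proof (Rabs_pos c). pose proof (Rabs_pos (RInt g 0 T)).
  apply Rle_lt_trans with ((Rabs c + 1) * Rabs (RInt g 0 T)). nra.
  apply Rmult_lt_compat_l with (r := Rabs c + 1) in HT1; [|lra].
  replace ((Rabs c + 1) * (eps / (Rabs c + 1))) with eps in HT1 by (field; lra). lra.
Qed.

Lemma exp_powR x n : exp x ^ n = exp (INR n * x).
Proof.
  induction n. simpl. rewrite Rmult_0_l, exp_0; auto.
  rewrite S_INR, <- tech_pow_Rmult, IHn, <- exp_plus. f_equal. ring.
Qed.

Section Core.
Variable f : R -> R.
Hypothesis Cf : C0 f.
Hypothesis Hlap : forall m : nat, (1 <= m)%nat -> Zlap (fun y => exp (- (INR m * y)) * f y).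

Lemma Zlap_tj (m : nat) : (1 <= m)%nat -> forall n j, (1 <= j)%nat ->
  Zlap (fun y => exp (- (INR m * y)) ^ j * (1 - exp (- (INR m * y))) ^ n * f y).
Proof.
  intros Hm n. induction n; intros j Hj.
  - apply Zlap_ext with (g := fun y => exp (- (INR (j * m) * y)) * f y).
    + intros y. rewrite exp_powR, mult_INR. simpl. replace (INR j * - (INR m * y)) with (- (INR j * INR m * y)) by ring. ring.
    + apply Hlap. lia.
  - apply Zlap_ext with (g := fun y =>
       exp (- (INR m * y)) ^ j * (1 - exp (- (INR m * y))) ^ n * f y +
       (-1) * (exp (- (INR m * y)) ^ (S j) * (1 - exp (- (INR m * y))) ^ n * f y)).
    + intros y. simpl. ring.
    + assert (CC : forall jj, C0 (fun y => exp (- (INR m * y)) ^ jj * (1 - exp (- (INR m * y))) ^ n * f y)).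
      { intro jj. apply C0_mult; auto. apply C0_mult; apply C0_pow.
        apply C0_exp, C0_opp, C0_mult; [apply C0_const|apply C0_id].
        apply C0_minus; [apply C0_const|]. apply C0_exp, C0_opp, C0_mult; [apply C0_const|apply C0_id]. }
      apply Zlap_plus; [apply CC | apply C0_mult; [apply C0_const| apply CC] | apply IHn; lia | apply Zlap_scal; [apply CC| apply IHn; lia]].
Qed.

Lemma Zlap_K (m : nat) : (1 <= m)%nat -> forall N,
  Zlap (fun y => (1 - (1 - exp (- (INR m * y))) ^ N) * f y).
Proof.
  intros Hm N. induction N.
  - apply Zlap_ext with (g := fun _ => 0). intros; simpl; ring. apply Zlap_zero.
  - apply Zlap_ext with (g := fun y => (1 - (1 - exp (- (INR m * y))) ^ N) * f y +
        exp (- (INR m * y)) ^ 1 * (1 - exp (- (INR m * y))) ^ N * f y).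
    + intros; simpl; ring.
    + assert (Ct : C0 (fun y => exp (- (INR m * y)))).
      { apply C0_exp, C0_opp, C0_mult; [apply C0_const|apply C0_id]. }
      apply Zlap_plus; auto.
      * apply C0_mult; auto. apply C0_minus. apply C0_const. apply C0_pow, C0_minus; auto. apply C0_const.
      * apply C0_mult; auto. apply C0_mult; apply C0_pow; auto. apply C0_minus; auto. apply C0_const.
      * apply Zlap_tj; auto.
Qed.

End Core.

Lemma bernoulli t N : 0 <= t <= 1 -> 1 - INR N * t <= (1 - t) ^ N.
Proof.
  intros Ht. induction N. simpl; lra.
  rewrite S_INR. simpl. assert (0 <= 1 - t) by lra.
  pose proof (pos_INR N).
  assert (0 <= (1 - t) * ((1 - t) ^ N - (1 - INR N * t))) by (apply Rmult_le_pos; lra).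
  assert (0 <= INR N * (t * t)) by (apply Rmult_le_pos; nra). nra.
Qed.

Lemma pow_le_exp t N : 0 <= t <= 1 -> (1 - t) ^ N <= exp (- (INR N * t)).
Proof.
  intros Ht. replace (- (INR N * t)) with (INR N * (- t)) by ring. rewrite <- exp_powR.
  apply pow_incr. split. lra. pose proof (exp_ineq1_le (- t)). lra.
Qed.

Lemma exp_neg_le_inv u : 0 < u -> exp (- u) <= / u.
Proof.
  intros Hu. rewrite exp_Ropp. apply Rinv_le_contravar; auto.
  pose proof (exp_ineq1_le u). lra.
Qed.

Lemma nat_above M : exists m : nat, (1 <= m)%nat /\ M < INR m.
Proof.
  destruct (archimed M) as [H1 _].
  exists (S (Z.to_nat (up M))). split. lia.
  rewrite S_INR. destruct (Z.le_gt_cases 0 (up M)).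
  - rewrite INR_IZR_INZ, Z2Nat.id; auto. lra.
  - assert (IZR (up M) < 0). { apply IZR_lt. lia. } pose proof (pos_INR (Z.to_nat (up M))). lra.
Qed.

Lemma nat_between x : 0 <= x -> exists N : nat, x <= INR N <= x + 1.
Proof.
  intros Hx. destruct (archimed x) as [H1 H2].
  exists (Z.to_nat (up x)). rewrite INR_IZR_INZ, Z2Nat.id. lra.
  apply le_IZR. lra.
Qed.

Lemma lerch_core f C Y : C0 f ->
  (forall y, 0 <= y -> Rabs (f y) <= C * exp (- y)) ->
  (forall m : nat, (1 <= m)%nat -> Zlap (fun y => exp (- (INR m * y)) * f y)) ->
  0 < Y -> RInt f 0 Y = 0.
Proof.
  intros Cf Hb Hlap HY.
  assert (HC : 0 <= C).
  { specialize (Hb 0 (Rle_refl 0)). rewrite Ropp_0, exp_0 in Hb. pose proof (Rabs_pos (f 0)). lra. }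
  assert (Hb' : forall y, 0 <= y -> Rabs (f y) <= C).
  { intros y Hy. eapply Rle_trans. apply Hb; auto. assert (exp (- y) <= 1).
    { rewrite <- exp_0. apply exp_le. lra. } nra. }
  assert (Suff : forall eps, 0 < eps -> Rabs (RInt f 0 Y) < eps).
  2:{ destruct (Req_dec (RInt f 0 Y) 0) as [E|E]; auto.
      specialize (Suff (Rabs (RInt f 0 Y)) (Rabs_pos_lt _ E)). lra. }
  intros eps Heps.
  set (delta := Rmin (Y / 2) (eps / (8 * (C + 1)))).
  assert (Hd : 0 < delta).
  { unfold delta. apply Rmin_pos. lra. apply Rdiv_lt_0_compat; lra. }
  assert (HdY : delta <= Y / 2) by apply Rmin_l.
  assert (HdC : delta * C <= eps / 8).
  { assert (delta <= eps / (8 * (C + 1))) by apply Rmin_r.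
    apply Rle_trans with (eps / (8 * (C + 1)) * (C + 1)).
    nra. right. field. lra. }
  set (B := C * (Y + 2) + 1).
  assert (HB : 0 < B) by (unfold B; nra).
  destruct (nat_above (4 * B / (eps * delta))) as [m [Hm1 Hm]].
  set (em := exp (- (INR m * delta))).
  assert (Hem0 : 0 < em) by apply exp_pos.
  assert (Hem : em * B < eps / 4).
  { unfold em. pose proof (exp_neg_le_inv (INR m * delta)) as E.
    assert (0 < INR m * delta). { apply Rmult_lt_0_compat; auto. apply lt_0_INR; lia. }
    specialize (E H).
    assert (4 * B / (eps * delta) * delta < INR m * delta) by (apply Rmult_lt_compat_r; auto).
    replace (4 * B / (eps * delta) * delta) with (4 * B / eps) in H0 by (field; lra).
    apply Rle_lt_trans with (/ (INR m * delta) * B). apply Rmult_le_compat_r; lra.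
    apply Rmult_lt_reg_l with (INR m * delta); auto.
    rewrite <- Rmult_assoc, Rinv_r by lra.
    apply Rmult_lt_reg_l with (4 / eps). apply Rdiv_lt_0_compat; lra.
    replace (4 / eps * (1 * B)) with (4 * B / eps) by (field; lra).
    replace (4 / eps * (INR m * delta * (eps / 4))) with (INR m * delta) by (field; lra). lra. }
  set (t := fun y => exp (- (INR m * y))).
  assert (Ht : forall y, 0 <= y -> 0 < t y <= 1).
  { intros y Hy. unfold t. split. apply exp_pos. rewrite <- exp_0. apply exp_le.
    pose proof (pos_INR m). nra. }
  assert (HmY : 0 <= INR m * Y) by (pose proof (pos_INR m); nra).
  destruct (nat_between (exp (INR m * Y))) as [N [HN1 HN2]].
  { left; apply exp_pos. }
  assert (HeY : 1 <= exp (INR m * Y)) by (rewrite <- exp_0; apply exp_le; auto).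
  set (K := fun y => 1 - (1 - t y) ^ N).
  assert (CK : C0 K).
  { unfold K, t. apply C0_minus. apply C0_const. apply C0_pow, C0_minus. apply C0_const.
    apply C0_exp, C0_opp, C0_mult; [apply C0_const|apply C0_id]. }
  assert (HK01 : forall y, 0 <= y -> 0 <= K y <= 1).
  { intros y Hy. unfold K. specialize (Ht y Hy). split.
    - assert ((1 - t y) ^ N <= 1 ^ N) by (apply pow_incr; lra). rewrite pow1 in H. lra.
    - assert (0 <= (1 - t y) ^ N) by (apply pow_le; lra). lra. }
  assert (HKhi : forall y, Y + delta <= y -> K y <= 2 * em).
  { intros y Hy. unfold K. assert (0 <= y) by lra.
    pose proof (Ht y H) as Hty. pose proof (bernoulli (t y) N ltac:(lra)).
    assert (INR N * t y <= 2 * em).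
    { unfold t, em. apply Rle_trans with (2 * exp (INR m * Y) * exp (- (INR m * y))).
      pose proof (Ht y H). unfold t in H1. nra.
      rewrite Rmult_assoc, <- exp_plus. apply Rmult_le_compat_l. lra. apply exp_le.
      pose proof (pos_INR m). nra. }
    lra. }
  assert (HKlo : forall y, 0 <= y <= Y - delta -> 1 - K y <= em).
  { intros y Hy. unfold K. replace (1 - (1 - (1 - t y) ^ N)) with ((1 - t y) ^ N) by ring.
    eapply Rle_trans. apply pow_le_exp. pose proof (Ht y ltac:(lra)); lra.
    eapply Rle_trans. apply exp_neg_le_inv.
    { apply Rmult_lt_0_compat. lra. apply Ht; lra. }
    unfold em. rewrite <- Rinv_inv. apply Rinv_le_contravar.
    { apply Rinv_0_lt_compat, exp_pos. }
    rewrite <- exp_Ropp, Ropp_involutive.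
    apply Rle_trans with (exp (INR m * Y) * t y).
    2:{ apply Rmult_le_compat_r. left; apply Ht; lra. auto. }
    unfold t. rewrite <- exp_plus. apply exp_le. pose proof (pos_INR m). nra. }
  destruct (Zlap_K f Cf Hlap m Hm1 N (eps / 4)) as [T0 HT0]. lra.
  set (T := Rmax T0 (2 * Y + 1)).
  assert (HT : Rabs (RInt (fun y => K y * f y) 0 T) < eps / 4).
  { apply HT0. apply Rmax_l. }
  assert (HTY : 2 * Y + 1 <= T) by apply Rmax_r.
  assert (CKf : C0 (fun y => K y * f y)) by (apply C0_mult; auto).
  assert (CK1f : C0 (fun y => (K y - 1) * f y)) by (apply C0_mult; auto; apply C0_minus; auto; apply C0_const).
  assert (E1 : RInt (fun y => K y * f y) 0 T =
     RInt (fun y => K y * f y) 0 (Y - delta) + RInt (fun y => K y * f y) (Y - delta) (Y + delta)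
     + RInt (fun y => K y * f y) (Y + delta) T).
  { rewrite (RInt_ChaslesR _ 0 (Y - delta) (Y + delta)) by (apply C0_ex; auto).
    rewrite (RInt_ChaslesR _ 0 (Y + delta) T) by (apply C0_ex; auto). reflexivity. }
  assert (E2 : RInt f 0 Y = RInt f 0 (Y - delta) + RInt f (Y - delta) Y).
  { symmetry. apply RInt_ChaslesR; apply C0_ex; auto. }
  assert (E3 : RInt (fun y => (K y - 1) * f y) 0 (Y - delta) =
     RInt (fun y => K y * f y) 0 (Y - delta) - RInt f 0 (Y - delta)).
  { rewrite <- RInt_minusR by (apply C0_ex; auto). apply RInt_ext. intros x _. rewrite Rmult_minus_distr_r, Rmult_1_l. reflexivity. }
  assert (B1 : Rabs (RInt (fun y => (K y - 1) * f y) 0 (Y - delta)) <= (Y - delta - 0) * (em * C)).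
  { apply RInt_abs_const; auto. lra. intros y Hy. rewrite Rabs_mult.
    assert (Rabs (K y - 1) <= em).
    { rewrite Rabs_minus_sym, Rabs_pos_eq. apply HKlo; lra. pose proof (HK01 y (proj1 Hy)); lra. }
    apply Rmult_le_compat; auto using Rabs_pos. apply Hb'. lra. }
  assert (B2 : Rabs (RInt (fun y => K y * f y) (Y - delta) (Y + delta)) <= (Y + delta - (Y - delta)) * C).
  { apply RInt_abs_const; auto. lra. intros y Hy. rewrite Rabs_mult.
    assert (0 <= y) by lra. pose proof (HK01 y H). rewrite Rabs_pos_eq by lra.
    pose proof (Hb' y H). pose proof (Rabs_pos (f y)). nra. }
  assert (B3 : Rabs (RInt f (Y - delta) Y) <= (Y - (Y - delta)) * C).
  { apply RInt_abs_const; auto. lra. intros y Hy. apply Hb'. lra. }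
  assert (B4 : Rabs (RInt (fun y => K y * f y) (Y + delta) T) <= 2 * em * C).
  { eapply Rle_trans. apply RInt_abs_bound with (G := fun y => (2 * em * C) * exp (- y)); auto.
    lra. apply C0_mult. apply C0_const. apply C0_exp, C0_opp, C0_id.
    { intros y Hy. rewrite Rabs_mult. assert (0 <= y) by lra. pose proof (HK01 y H).
      rewrite (Rabs_pos_eq (K y)) by lra. pose proof (HKhi y (proj1 Hy)).
      pose proof (Hb y H). pose proof (Rabs_pos (f y)). pose proof (exp_pos (- y)).
      apply Rle_trans with (2 * em * (C * exp (- y))). apply Rmult_le_compat; lra. lra. }
    rewrite RInt_scalR by (apply C0_ex, C0_exp, C0_opp, C0_id). rewrite RInt_exp_neg.
    pose proof (exp_pos (- T)). assert (exp (- (Y + delta)) <= 1) by (rewrite <- exp_0; apply exp_le; lra).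
    assert (0 <= 2 * em * C) by nra. nra. }
  assert (EE : RInt f 0 Y = RInt (fun y => K y * f y) 0 T
     - RInt (fun y => (K y - 1) * f y) 0 (Y - delta)
     - RInt (fun y => K y * f y) (Y - delta) (Y + delta)
     - RInt (fun y => K y * f y) (Y + delta) T + RInt f (Y - delta) Y).
  { rewrite E1, E2, E3. lra. }
  rewrite EE.
  set (a1 := RInt (fun y => K y * f y) 0 T) in *.
  set (a2 := RInt (fun y => (K y - 1) * f y) 0 (Y - delta)) in *.
  set (a3 := RInt (fun y => K y * f y) (Y - delta) (Y + delta)) in *.
  set (a4 := RInt (fun y => K y * f y) (Y + delta) T) in *.
  set (a5 := RInt f (Y - delta) Y) in *.
  assert (em * C * Y + 2 * em * C <= em * B) by (unfold B; nra).
  assert (Rabs (a1 - a2 - a3 - a4 + a5) <= Rabs a1 + Rabs a2 + Rabs a3 + Rabs a4 + Rabs a5).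
  { pose proof (Rabs_triang (a1 - a2 - a3 - a4) a5). pose proof (Rabs_triang (a1 - a2 - a3) (- a4)).
    pose proof (Rabs_triang (a1 - a2) (- a3)). pose proof (Rabs_triang a1 (- a2)).
    rewrite Rabs_Ropp in *. unfold Rminus in *. lra. }
  nra.
Qed.

Definition Dd s mu q := sqrt (mu ^ 2 + 2 * q * s).

Section A.
Variables s mu q : R.
Hypothesis Hs : 0 < s.
Hypothesis Hq : 0 < q.

Lemma Dd_sq : Dd s mu q * Dd s mu q = mu ^ 2 + 2 * q * s.
Proof. unfold Dd. apply sqrt_sqrt. nra. Qed.
Lemma Dd_pos : 0 < Dd s mu q.
Proof. unfold Dd. apply sqrt_lt_R0. nra. Qed.
Lemma Dd_gt_mu : Rabs mu < Dd s mu q.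
Proof.
  pose proof Dd_sq. pose proof Dd_pos. pose proof (Rabs_pos mu).
  assert (Rabs mu * Rabs mu = mu ^ 2) by (rewrite <- Rabs_mult; simpl; rewrite Rmult_1_r; apply Rabs_pos_eq; nra).
  nra.
Qed.
Lemma ap_pos : 0 < alpha_plus s mu q.
Proof. unfold alpha_plus. pose proof Dd_gt_mu. fold (Dd s mu q).
  apply Rdiv_lt_0_compat; auto. pose proof (Rle_abs mu). lra. Qed.
Lemma am_neg : alpha_minus s mu q < 0.
Proof. unfold alpha_minus. pose proof Dd_gt_mu. fold (Dd s mu q).
  assert (0 < (mu + Dd s mu q) / s). apply Rdiv_lt_0_compat; auto.
  pose proof (Rle_abs (-mu)). rewrite Rabs_Ropp in H0. lra.
  replace ((- mu - Dd s mu q) / s) with (- ((mu + Dd s mu q) / s)) by (field; lra). lra. Qed.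
Lemma ab_diff : alpha_plus s mu q - alpha_minus s mu q = 2 * Dd s mu q / s.
Proof. unfold alpha_plus, alpha_minus, Dd. field. lra. Qed.
Lemma ab_prod : alpha_plus s mu q * alpha_minus s mu q = - 2 * q / s.
Proof. unfold alpha_plus, alpha_minus. fold (Dd s mu q). pose proof Dd_sq.
  replace ((- mu + Dd s mu q) / s * ((- mu - Dd s mu q) / s)) with ((mu * mu - Dd s mu q * Dd s mu q) / (s * s)) by (field; lra).
  rewrite H. field. lra. Qed.
Lemma psi_fact b : psi s mu b - q = s / 2 * (b - alpha_plus s mu q) * (b - alpha_minus s mu q).
Proof.
  unfold psi. pose proof ab_prod.
  assert (alpha_plus s mu q + alpha_minus s mu q = - 2 * mu / s) by (unfold alpha_plus, alpha_minus; field; lra).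
  replace (s / 2 * (b - alpha_plus s mu q) * (b - alpha_minus s mu q)) with
    (s / 2 * (b * b - (alpha_plus s mu q + alpha_minus s mu q) * b + alpha_plus s mu q * alpha_minus s mu q)) by ring.
  rewrite H, H0. field. lra.
Qed.
Lemma psi_root_a : psi s mu (alpha_plus s mu q) = q.
Proof. pose proof (psi_fact (alpha_plus s mu q)). rewrite Rminus_diag, Rmult_0_r, Rmult_0_l in H. lra. Qed.
End A.

Lemma exp_small k eps : 0 < k -> 0 < eps -> exists T0, forall T, T0 <= T -> exp (- (k * T)) < eps.
Proof.
  intros Hk He. exists (/ (k * eps) + 1). intros T HT.
  assert (0 < / (k * eps)) by (apply Rinv_0_lt_compat; nra).
  assert (0 < k * T) by nra.
  eapply Rle_lt_trans. apply exp_neg_le_inv; auto.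
  apply Rmult_lt_reg_l with (k * T); auto. rewrite Rinv_r by lra.
  assert (k * T >= k * (/ (k * eps) + 1)) by nra.
  assert (k * (/ (k * eps) + 1) * eps = 1 + k * eps) by (field; lra). nra.
Qed.

Lemma zero_from_int f : C0 f -> (forall Y, 0 < Y -> RInt f 0 Y = 0) -> forall Y, 0 < Y -> f Y = 0.
Proof.
  intros Cf H Y HY.
  assert (D1 : is_derive (fun b => RInt f 0 b) Y (f Y)).
  { apply (is_derive_RInt f (fun b => RInt f 0 b) 0 Y).
    - apply filter_forall. intros b. apply (RInt_correct (V:=R_CompleteNormedModule)). apply C0_ex; auto.
    - apply Cf. }
  assert (D2 : is_derive (fun b => RInt f 0 b) Y 0).
  { apply is_derive_ext_loc with (f := fun _ => 0).
    - apply locally_interval with (a := Finite 0) (b := p_infty). simpl; auto. simpl; auto.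
      intros y Hy _. simpl in Hy. rewrite H; auto.
    - apply (is_derive_const (K:=R_AbsRing) (V:=R_NormedModule)). }
  apply is_derive_unique in D1. apply is_derive_unique in D2. congruence.
Qed.

Lemma Rmax0_lip x y : Rabs (Rmax y 0 - Rmax x 0) <= Rabs (y - x).
Proof. unfold Rmax. destruct (Rle_dec y 0), (Rle_dec x 0); unfold Rabs;
  repeat destruct Rcase_abs; lra. Qed.

Lemma is_derive_expc c y : c <> 0 -> is_derive (fun y => exp (c * y) / c) y (exp (c * y)).
Proof. intros Hc. auto_derive; auto. field; auto. Qed.

Lemma RInt_expc c a b : c <> 0 -> RInt (fun y => exp (c * y)) a b = exp (c * b) / c - exp (c * a) / c.
Proof.
  intros Hc. apply is_RInt_unique.
  apply (is_RInt_derive (V:=R_CompleteNormedModule) (fun y => exp (c * y) / c)).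
  - intros. apply is_derive_expc; auto.
  - intros. apply (C0_exp (fun y => c * y)). apply C0_mult. apply C0_const. apply C0_id.
Qed.

Definition Wst s mu q y :=
  (exp (alpha_plus s mu q * y) - exp (alpha_minus s mu q * y)) / Dd s mu q.

Section W.
Variables s mu q : R.
Hypothesis Hs : 0 < s.
Hypothesis Hq : 0 < q.
Let a := alpha_plus s mu q.
Let b := alpha_minus s mu q.
Let D := Dd s mu q.

Lemma C0_Wst : C0 (Wst s mu q).
Proof. unfold Wst. apply C0_mult. apply C0_minus; apply (C0_exp (fun y => _ * y)); apply C0_mult;
  try apply C0_const; apply C0_id. apply C0_const. Qed.

Lemma RInt_Wst_lap beta T : a < beta ->
  RInt (fun y => exp (- (beta * y)) * Wst s mu q y) 0 T =
  (exp ((a - beta) * T) / (a - beta) - exp ((b - beta) * T) / (b - beta)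
    - (1 / (a - beta) - 1 / (b - beta))) / D.
Proof.
  intros Hb. pose proof (ap_pos s mu q Hs Hq). pose proof (am_neg s mu q Hs Hq).
  fold a b in H, H0. pose proof (Dd_pos s mu q Hs Hq). fold D in H1.
  rewrite (RInt_extR _ (fun y => / D * (exp ((a - beta) * y) - exp ((b - beta) * y)))).
  2:{ intros y _. unfold Wst. fold a b D.
      replace ((a - beta) * y) with (a * y + - (beta * y)) by ring.
      replace ((b - beta) * y) with (b * y + - (beta * y)) by ring. rewrite !exp_plus. field. lra. }
  rewrite RInt_scalR. rewrite RInt_minusR. rewrite !RInt_expc by lra.
  rewrite !Rmult_0_r, exp_0. toR. field. repeat split; lra.
  all: exR.
Qed.

Lemma Wst_lap beta : a < beta -> forall eps, 0 < eps -> exists T0, forall T, T0 <= T ->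
  Rabs (RInt (fun y => exp (- (beta * y)) * Wst s mu q y) 0 T - / (psi s mu beta - q)) < eps.
Proof.
  intros Hb eps He. pose proof (ap_pos s mu q Hs Hq). pose proof (am_neg s mu q Hs Hq).
  fold a b in H, H0. pose proof (Dd_pos s mu q Hs Hq). fold D in H1.
  destruct (exp_small (beta - a) (eps * (beta - a) * D / 2)) as [T1 HT1]. lra.
  { apply Rdiv_lt_0_compat. apply Rmult_lt_0_compat; [apply Rmult_lt_0_compat|]; lra. lra. }
  exists (Rmax T1 0). intros T HT. rewrite RInt_Wst_lap by auto.
  assert (T1 <= T) by (eapply Rle_trans; [apply Rmax_l|exact HT]).
  assert (0 <= T) by (eapply Rle_trans; [apply Rmax_r|exact HT]).
  assert (Econst : - (1 / (a - beta) - 1 / (b - beta)) / D = / (psi s mu beta - q)).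
  { rewrite psi_fact by auto. fold a b.
    assert (a - b = 2 * D / s) by (unfold a, b, D; apply ab_diff; lra).
    replace D with (s * (a - b) / 2) by (rewrite H4; field; lra).
    field. repeat split; lra. }
  set (e1 := exp ((a - beta) * T)). set (e2 := exp ((b - beta) * T)).
  assert (He1 : e1 < eps * (beta - a) * D / 2).
  { unfold e1. replace ((a - beta) * T) with (- ((beta - a) * T)) by ring. apply HT1; auto. }
  assert (He2 : e2 <= e1) by (apply exp_le; nra).
  assert (0 < e2) by apply exp_pos.
  replace ((e1 / (a - beta) - e2 / (b - beta) - (1 / (a - beta) - 1 / (b - beta))) / D - / (psi s mu beta - q))
    with ((e1 / (a - beta) - e2 / (b - beta)) / D) by (rewrite <- Econst; field; repeat split; lra).
  replace ((e1 / (a - beta) - e2 / (b - beta)) / D) with (- (e1 / (beta - a) / D) + e2 / (beta - b) / D)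
    by (field; repeat split; lra).
  eapply Rle_lt_trans. apply Rabs_triang. rewrite Rabs_Ropp.
  assert (0 < beta - a) by lra. assert (0 < beta - b) by lra.
  rewrite !Rabs_pos_eq.
  2,3: apply Rmult_le_pos; [apply Rmult_le_pos|]; try (left; apply Rinv_0_lt_compat); lra.
  assert (e2 / (beta - b) <= e1 / (beta - a)).
  { unfold Rdiv. apply Rmult_le_compat; try lra. left; apply Rinv_0_lt_compat; lra.
    apply Rinv_le_contravar; lra. }
  assert (e1 / (beta - a) / D < eps / 2).
  { apply Rmult_lt_reg_l with ((beta - a) * D). nra.
    replace ((beta - a) * D * (e1 / (beta - a) / D)) with e1 by (field; lra). lra. }
  assert (e2 / (beta - b) / D <= e1 / (beta - a) / D) by (unfold Rdiv at 2 4; apply Rmult_le_compat_r; [left; apply Rinv_0_lt_compat|]; lra).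
  lra.
Qed.
End W.

Lemma W_int s mu q W : 0 < s -> 0 < q -> is_scale_W s mu q W -> forall x, 0 <= x ->
  Rint W 0 x = ((exp (alpha_plus s mu q * x) - 1) / alpha_plus s mu q
               - (exp (alpha_minus s mu q * x) - 1) / alpha_minus s mu q) / Dd s mu q.
Proof.
  intros Hs Hq HW.
  destruct HW as [Hneg [Hcont [Hmono [Phi [[HPhi0 [HPhiq HPhimax]] Hlap]]]]].
  pose proof (ap_pos s mu q Hs Hq) as Ha. pose proof (am_neg s mu q Hs Hq) as Hbn.
  pose proof (Dd_pos s mu q Hs Hq) as HD.
  set (a := alpha_plus s mu q) in *. set (b := alpha_minus s mu q) in *. set (D := Dd s mu q) in *.
  set (Wt := fun y => W (Rmax y 0)).
  assert (CWt : C0 Wt).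
  { intro x. apply cont_from_epsdelta. intros eps He.
    destruct (Hcont (Rmax x 0) (Rmax_r _ _) eps He) as [d [Hd Hy]].
    exists d. split; auto. intros y Hyx. unfold Wt. apply Hy. apply Rmax_r.
    eapply Rle_lt_trans. apply Rmax0_lip. auto. }
  assert (WtW : forall y, 0 <= y -> Wt y = W y).
  { intros y Hy. unfold Wt. rewrite Rmax_left; auto. }
  assert (Rint_lap : forall beta T, 0 <= T ->
     Rint (fun y => exp (- (beta * y)) * W y) 0 T = RInt (fun y => exp (- (beta * y)) * Wt y) 0 T).
  { intros beta T HT.
    assert (E : forall y, Rmin 0 T < y < Rmax 0 T -> exp (- (beta * y)) * Wt y = exp (- (beta * y)) * W y).
    { intros y Hy. rewrite Rmin_left, Rmax_right in Hy by auto. rewrite WtW; auto. lra. }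
    rewrite Rint_RInt.
    - symmetry. apply RInt_extR. auto.
    - apply (ex_RInt_ext (V:=R_NormedModule) (fun y => exp (- (beta * y)) * Wt y)); auto. exR. }
  set (b1 := Phi + 1).
  assert (Hb1 : 0 < b1) by (unfold b1; lra).
  assert (CG : forall beta, C0 (fun y => exp (- (beta * y)) * Wt y)) by (intro; c0).
  assert (Hexp : exists C1, 0 <= C1 /\ forall y, 0 <= y -> Rabs (W y) <= C1 * exp (b1 * y)).
  { destruct (Hlap b1 ltac:(unfold b1; lra)) as [_ Hconv].
    destruct (Hconv 1 Rlt_0_1) as [T0 HT0].
    set (T1 := Rmax T0 0).
    assert (Hbig : forall T, T1 <= T -> W T <= 2 * exp b1 * exp (b1 * T)).
    { intros T HT. assert (HT0' : T0 <= T) by (eapply Rle_trans; [apply Rmax_l|exact HT]).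
      assert (HTp : 0 <= T) by (eapply Rle_trans; [apply Rmax_r|exact HT]).
      destruct (Rle_lt_dec (W T) 0) as [Hn|Hp].
      { pose proof (exp_pos b1). pose proof (exp_pos (b1 * T)). nra. }
      pose proof (HT0 T HT0') as A1. pose proof (HT0 (T + 1) ltac:(lra)) as A2.
      rewrite Rint_lap in A1, A2 by lra.
      assert (Ch : RInt (fun y => exp (- (b1 * y)) * Wt y) 0 (T + 1) - RInt (fun y => exp (- (b1 * y)) * Wt y) 0 T
               = RInt (fun y => exp (- (b1 * y)) * Wt y) T (T + 1)).
      { rewrite <- (RInt_ChaslesR _ 0 T (T + 1)) by (apply C0_ex; auto). lra. }
      assert (Lo : (T + 1 - T) * (exp (- (b1 * (T + 1))) * W T) <= RInt (fun y => exp (- (b1 * y)) * Wt y) T (T + 1)).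
      { rewrite <- RInt_constR. apply RInt_le. lra. apply C0_ex, C0_const. apply C0_ex; auto.
        intros y Hy. rewrite WtW by lra. pose proof (Hmono T y HTp ltac:(lra)).
        assert (exp (- (b1 * (T + 1))) <= exp (- (b1 * y))) by (apply exp_le; nra).
        pose proof (exp_pos (- (b1 * (T + 1)))). nra. }
      unfold Rabs in A1, A2. destruct Rcase_abs in A1; destruct Rcase_abs in A2.
      all: assert (Hlt : exp (- (b1 * (T + 1))) * W T < 2) by lra.
      all: assert (E : exp b1 * exp (b1 * T) * exp (- (b1 * (T + 1))) = 1)
             by (rewrite <- !exp_plus; replace (b1 + b1 * T + - (b1 * (T + 1))) with 0 by ring; apply exp_0).
      all: assert (0 < exp b1 * exp (b1 * T)) by (apply Rmult_lt_0_compat; apply exp_pos).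
      all: nra. }
    exists (Rabs (W T1) + 2 * exp b1 + Rabs (W 0)). split.
    { pose proof (Rabs_pos (W T1)). pose proof (Rabs_pos (W 0)). pose proof (exp_pos b1). lra. }
    intros y Hy.
    assert (He1 : 1 <= exp (b1 * y)) by (rewrite <- exp_0; apply exp_le; nra).
    pose proof (Rabs_pos (W T1)). pose proof (Rabs_pos (W 0)). pose proof (exp_pos b1).
    pose proof (Hmono 0 y (Rle_refl 0) Hy).
    pose proof (Rle_abs (W T1)). pose proof (Rle_abs (- W 0)). rewrite Rabs_Ropp in H4.
    unfold Rabs at 1. destruct Rcase_abs.
    - nra.
    - destruct (Rle_lt_dec T1 y).
      + pose proof (Hbig y r0). nra.
      + assert (0 <= T1) by apply Rmax_r. pose proof (Hmono y T1 Hy ltac:(lra)). nra. }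
  destruct Hexp as [C1 [HC1 Hexp]].
  set (c0 := Rmax b1 a). set (b0 := c0 + 1).
  set (f := fun y => exp (- (b0 * y)) * (Wt y - Wst s mu q y)).
  assert (Cf : C0 f) by (unfold f; pose proof (C0_Wst s mu q); c0).
  set (C2 := C1 + 2 / D).
  assert (Hfb : forall y, 0 <= y -> Rabs (f y) <= C2 * exp (- y)).
  { intros y Hy. unfold f. rewrite Rabs_mult, Rabs_pos_eq by (left; apply exp_pos).
    assert (E1 : exp (b1 * y) <= exp (c0 * y)) by (apply exp_le; apply Rmult_le_compat_r; auto; apply Rmax_l).
    assert (E2 : exp (a * y) <= exp (c0 * y)) by (apply exp_le; apply Rmult_le_compat_r; auto; apply Rmax_r).
    assert (E3 : exp (b * y) <= exp (a * y)) by (apply exp_le; nra).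
    assert (HWs : Rabs (Wst s mu q y) <= 2 / D * exp (c0 * y)).
    { unfold Wst. fold a b D. unfold Rdiv. rewrite Rabs_mult, (Rabs_pos_eq (/ D)) by (left; apply Rinv_0_lt_compat; auto).
      pose proof (exp_pos (a * y)). pose proof (exp_pos (b * y)).
      assert (Rabs (exp (a * y) - exp (b * y)) <= 2 * exp (c0 * y)) by (rewrite Rabs_pos_eq; lra).
      pose proof (Rinv_0_lt_compat D HD). nra. }
    assert (Rabs (Wt y - Wst s mu q y) <= C2 * exp (c0 * y)).
    { eapply Rle_trans. apply Rabs_triang. rewrite Rabs_Ropp. rewrite WtW by auto.
      pose proof (Hexp y Hy). unfold C2. nra. }
    assert (exp (- (b0 * y)) * exp (c0 * y) = exp (- y)).
    { rewrite <- exp_plus. f_equal. unfold b0. ring. }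
    pose proof (exp_pos (- (b0 * y))). nra. }
  assert (Hz : forall m : nat, (1 <= m)%nat -> Zlap (fun y => exp (- (INR m * y)) * f y)).
  { intros m Hm eps He.
    set (beta := INR m + b0).
    assert (Hbeta1 : Phi < beta).
    { unfold beta, b0. pose proof (Rmax_l b1 a). fold c0 in H. pose proof (pos_INR m). unfold b1 in H. lra. }
    assert (Hbeta2 : a < beta).
    { unfold beta, b0. pose proof (Rmax_r b1 a). fold c0 in H. pose proof (pos_INR m). lra. }
    destruct (Hlap beta Hbeta1) as [_ Hc1]. destruct (Hc1 (eps / 2)) as [T1 HT1]. lra.
    destruct (Wst_lap s mu q Hs Hq beta Hbeta2 (eps / 2)) as [T2 HT2]. lra.
    exists (Rmax (Rmax T1 T2) 0). intros T HT.
    assert (T1 <= T /\ T2 <= T /\ 0 <= T) as [h1 [h2 h3]].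
    { pose proof (Rmax_l (Rmax T1 T2) 0). pose proof (Rmax_r (Rmax T1 T2) 0).
      pose proof (Rmax_l T1 T2). pose proof (Rmax_r T1 T2). lra. }
    rewrite (RInt_extR _ (fun y => exp (- (beta * y)) * Wt y - exp (- (beta * y)) * Wst s mu q y)).
    2:{ intros y _. unfold f, beta. replace (- ((INR m + b0) * y)) with (- (INR m * y) + - (b0 * y)) by ring.
        rewrite exp_plus. ring. }
    rewrite RInt_minusR by (apply C0_ex; pose proof (C0_Wst s mu q); c0).
    specialize (HT1 T h1). rewrite Rint_lap in HT1 by auto. specialize (HT2 T h2).
    set (u := RInt (fun y => exp (- (beta * y)) * Wt y) 0 T) in *.
    set (v := RInt (fun y => exp (- (beta * y)) * Wst s mu q y) 0 T) in *.
    replace (u - v) with ((u - / (psi s mu beta - q)) - (v - / (psi s mu beta - q))) by ring.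
    eapply Rle_lt_trans. apply Rabs_triang. rewrite Rabs_Ropp. lra. }
  assert (Hzero : forall Y, 0 < Y -> Wt Y = Wst s mu q Y).
  { intros Y HY. assert (f Y = 0).
    { refine (zero_from_int f Cf _ Y HY). intros Y' HY'. exact (lerch_core f C2 Y' Cf Hfb Hz HY'). }
    unfold f in H. pose proof (exp_pos (- (b0 * Y))). apply Rmult_integral in H.
    destruct H; lra. }
  intros x Hx.
  assert (E : forall y, Rmin 0 x < y < Rmax 0 x -> Wst s mu q y = W y).
  { intros y Hy. rewrite Rmin_left, Rmax_right in Hy by auto. rewrite <- Hzero by lra. apply WtW. lra. }
  rewrite Rint_RInt.
  2:{ apply (ex_RInt_ext (V:=R_NormedModule) (Wst s mu q)); auto. apply C0_ex, C0_Wst. }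
  rewrite <- (RInt_extR (Wst s mu q)) by auto.
  unfold Wst. fold a b D. unfold Rdiv at 1.
  rewrite (RInt_extR _ (fun y => / D * (exp (a * y) - exp (b * y)))) by (intros; ring).
  rewrite RInt_scalR by exR. rewrite RInt_minusR by exR.
  rewrite !RInt_expc by lra. rewrite !Rmult_0_r, exp_0. field. repeat split; lra.
Qed.

Fixpoint sumN (f : nat -> R) (n : nat) : R :=
  match n with O => 0 | S n => sumN f n + f n end.

Lemma sumN_ext f g n : (forall k, (k < n)%nat -> f k = g k) -> sumN f n = sumN g n.
Proof. induction n; simpl; intros; auto. rewrite IHn, H; auto. Qed.
Lemma sumN_plus f g n : sumN (fun k => f k + g k) n = sumN f n + sumN g n.
Proof. induction n; simpl; auto. ring. rewrite IHn; ring. Qed.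
Lemma sumN_scal c f n : sumN (fun k => c * f k) n = c * sumN f n.
Proof. induction n; simpl; auto. ring. rewrite IHn; ring. Qed.
Lemma sumN_minus f g n : sumN (fun k => f k - g k) n = sumN f n - sumN g n.
Proof. induction n; simpl; auto. ring. rewrite IHn; ring. Qed.
Lemma sumN_geom r n : r <> 1 -> sumN (fun k => r ^ k) n = (1 - r ^ n) / (1 - r).
Proof. intros Hr. induction n; simpl. field. lra. rewrite IHn. field. lra. Qed.
Lemma sumN_abs f n : Rabs (sumN f n) <= sumN (fun k => Rabs (f k)) n.
Proof. induction n; simpl. rewrite Rabs_R0; lra. eapply Rle_trans. apply Rabs_triang. lra. Qed.
Lemma sumN_le f g n : (forall k, (k < n)%nat -> f k <= g k) -> sumN f n <= sumN g n.
Proof. induction n; simpl; intros. lra. apply Rplus_le_compat; auto. Qed.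

Section Step.
Variables (h : R) (Wh : R -> R).
Hypothesis Hh : 0 < h.
Hypothesis Hstep : forall (k : nat) x, INR k * h <= x < (INR k + 1) * h -> Wh x = Wh (INR k * h).

Lemma step_piece (g : R -> R) (k : nat) : C0 g ->
  ex_RInt (fun y => g y * Wh y) (INR k * h) ((INR k + 1) * h) /\
  RInt (fun y => g y * Wh y) (INR k * h) ((INR k + 1) * h) =
  Wh (INR k * h) * RInt g (INR k * h) ((INR k + 1) * h).
Proof.
  intros Cg.
  assert (E : forall y, Rmin (INR k * h) ((INR k + 1) * h) < y < Rmax (INR k * h) ((INR k + 1) * h) ->
     g y * Wh (INR k * h) = g y * Wh y).
  { intros y Hy. rewrite Rmin_left, Rmax_right in Hy by nra. rewrite (Hstep k y); auto. lra. }
  split.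
  - apply (ex_RInt_ext (V:=R_NormedModule) (fun y => g y * Wh (INR k * h))); auto. exR.
  - rewrite <- (RInt_extR _ _ _ _ E). rewrite (RInt_extR _ (fun y => Wh (INR k * h) * g y)) by (intros; ring).
    apply RInt_scalR. apply C0_ex; auto.
Qed.

Lemma step_int (g : R -> R) (N : nat) : C0 g ->
  ex_RInt (fun y => g y * Wh y) 0 (INR N * h) /\
  RInt (fun y => g y * Wh y) 0 (INR N * h) =
  sumN (fun k => Wh (INR k * h) * RInt g (INR k * h) ((INR k + 1) * h)) N.
Proof.
  intros Cg. induction N.
  - simpl. rewrite Rmult_0_l. split. apply ex_RInt_point. rewrite RInt_point. reflexivity.
  - destruct IHN as [IH1 IH2]. destruct (step_piece g N Cg) as [P1 P2].
    rewrite S_INR. split.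
    + eapply ex_RInt_Chasles; eauto.
    + simpl. rewrite <- IH2, <- P2. symmetry. apply RInt_ChaslesR; auto.
Qed.
End Step.

Lemma sumN_shift f n m : sumN f (n + m) = sumN f n + sumN (fun j => f (n + j)%nat) m.
Proof. induction m; simpl. rewrite Nat.add_0_r; ring. rewrite Nat.add_succ_r. simpl. rewrite IHm. ring. Qed.

Lemma sumN_zero f n : (forall k, (k < n)%nat -> f k = 0) -> sumN f n = 0.
Proof. intros H. induction n; simpl; auto. rewrite IHn, H; auto. ring. Qed.

Lemma series_zero (d : nat -> R) C rho z1 : 0 < z1 -> 1 <= rho -> 0 <= C ->
  (forall k, Rabs (d k) <= C * rho ^ k) ->
  (forall z, 0 < z < z1 -> forall eps, 0 < eps -> exists N0 : nat, forall N, (N0 <= N)%nat ->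
      Rabs (sumN (fun k => d k * z ^ k) N) < eps) ->
  forall k, d k = 0.
Proof.
  intros Hz1 Hrho HC Hb Hs k. induction k as [k IH] using (well_founded_induction lt_wf).
  assert (Bound : forall z, 0 < z < z1 -> z <= / (2 * rho) -> Rabs (d k) <= (2 * C * rho ^ (S k) + 1) * z).
  { intros z Hz Hzr.
    assert (Hrz : 0 < rho * z <= / 2).
    { split. nra. apply Rmult_le_reg_l with (/ rho). apply Rinv_0_lt_compat; lra.
      rewrite <- Rmult_assoc, Rinv_l by lra. replace (/ rho * / 2) with (/ (2 * rho)); [lra|].
      rewrite Rinv_mult. ring. }
    pose proof (pow_lt z k (proj1 Hz)) as Hzk.
    destruct (Hs z Hz (z ^ S k)) as [N0 HN0]. { apply pow_lt; lra. }
    specialize (HN0 (S k + N0)%nat ltac:(lia)).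
    rewrite sumN_shift in HN0.
    assert (E1 : sumN (fun k0 => d k0 * z ^ k0) (S k) = d k * z ^ k).
    { simpl. rewrite sumN_zero. ring. intros j Hj. rewrite (IH j Hj). ring. }
    rewrite E1 in HN0.
    set (T := sumN (fun j => d (S k + j)%nat * z ^ (S k + j)) N0) in *.
    assert (HT : Rabs T <= 2 * C * rho ^ S k * z ^ S k).
    { unfold T. eapply Rle_trans. apply sumN_abs.
      eapply Rle_trans. apply sumN_le with (g := fun j => C * (rho * z) ^ (S k) * (rho * z) ^ j).
      { intros j _. rewrite Rabs_mult, (Rabs_pos_eq (z ^ _)) by (apply pow_le; lra).
        eapply Rle_trans. apply Rmult_le_compat_r. apply pow_le; lra. apply Hb.
        right. rewrite !Rpow_mult_distr, !pow_add. ring. }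
      rewrite sumN_scal, sumN_geom by lra.
      assert (0 <= (rho * z) ^ N0) by (apply pow_le; lra).
      assert ((1 - (rho * z) ^ N0) / (1 - rho * z) <= 2).
      { apply Rmult_le_reg_r with (1 - rho * z). lra. unfold Rdiv. rewrite Rmult_assoc, Rinv_l by lra. lra. }
      rewrite Rpow_mult_distr.
      assert (0 <= C * (rho ^ S k * z ^ S k)) by (apply Rmult_le_pos; auto; apply Rmult_le_pos; apply pow_le; lra).
      nra. }
    assert (Rabs (d k * z ^ k) < z ^ S k + 2 * C * rho ^ S k * z ^ S k).
    { replace (d k * z ^ k) with ((d k * z ^ k + T) - T) by ring.
      eapply Rle_lt_trans. apply Rabs_triang. rewrite Rabs_Ropp. lra. }
    rewrite Rabs_mult, (Rabs_pos_eq (z ^ k)) in H by (left; exact Hzk).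
    apply Rmult_le_reg_r with (z ^ k); auto.
    replace ((2 * C * rho ^ S k + 1) * z * z ^ k) with (z ^ S k + 2 * C * rho ^ S k * z ^ S k) by (simpl; ring). lra. }
  destruct (Req_dec (d k) 0) as [E|E]; auto. exfalso.
  set (M := 2 * C * rho ^ S k + 1).
  assert (HM : 0 < M). { unfold M. assert (0 <= rho ^ S k) by (apply pow_le; lra). nra. }
  set (z := Rmin (Rmin (z1 / 2) (/ (2 * rho))) (Rabs (d k) / (2 * M))).
  assert (Hdk : 0 < Rabs (d k)) by (apply Rabs_pos_lt; auto).
  assert (Hz0 : 0 < z). { unfold z. apply Rmin_pos. apply Rmin_pos. lra. apply Rinv_0_lt_compat; lra.
    apply Rdiv_lt_0_compat; lra. }
  assert (z <= z1 / 2) by (unfold z; eapply Rle_trans; [apply Rmin_l|apply Rmin_l]).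
  assert (z <= / (2 * rho)) by (unfold z; eapply Rle_trans; [apply Rmin_l|apply Rmin_r]).
  assert (z <= Rabs (d k) / (2 * M)) by (unfold z; apply Rmin_r).
  pose proof (Bound z ltac:(lra) H0). fold M in H2.
  assert (M * z <= Rabs (d k) / 2).
  { apply Rle_trans with (M * (Rabs (d k) / (2 * M))). nra. right. field. lra. }
  lra.
Qed.

Definition Dh s mu q h := sqrt (mu ^ 2 + 2 * q * s + q ^ 2 * h ^ 2).
Definition R1 s mu q h := (s + q * h ^ 2 + h * Dh s mu q h) / (s + mu * h).
Definition R2 s mu q h := (s + q * h ^ 2 - h * Dh s mu q h) / (s + mu * h).
Definition vv s mu q h (k : nat) := (R1 s mu q h ^ S k - R2 s mu q h ^ S k) / Dh s mu q h.
Definition Pz s mu q h z := (s + mu * h) - 2 * (s + q * h ^ 2) * z + (s - mu * h) * z ^ 2.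

Section D3.
Variables s mu q h : R.
Hypothesis Hs : 0 < s.
Hypothesis Hq : 0 < q.
Hypothesis Hh : 0 < h.
Hypothesis Hp : 0 < s + mu * h.
Hypothesis Hm : 0 < s - mu * h.

Lemma Dh_sq : Dh s mu q h * Dh s mu q h = mu ^ 2 + 2 * q * s + q ^ 2 * h ^ 2.
Proof. unfold Dh. apply sqrt_sqrt. nra. Qed.
Lemma Dh_pos : 0 < Dh s mu q h.
Proof. unfold Dh. apply sqrt_lt_R0. nra. Qed.
Lemma Dh_ge_D : Dd s mu q <= Dh s mu q h.
Proof. unfold Dh, Dd. apply sqrt_le_1_alt. nra. Qed.
Lemma Dh_gt_mu : Rabs mu < Dh s mu q h.
Proof. pose proof (Dd_gt_mu s mu q Hs Hq). pose proof Dh_ge_D. lra. Qed.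

Lemma R12_sum : R1 s mu q h + R2 s mu q h = 2 * (s + q * h ^ 2) / (s + mu * h).
Proof. unfold R1, R2. field. lra. Qed.
Lemma R12_prod : R1 s mu q h * R2 s mu q h = (s - mu * h) / (s + mu * h).
Proof. unfold R1, R2. pose proof Dh_sq.
  replace ((s + q * h ^ 2 + h * Dh s mu q h) / (s + mu * h) * ((s + q * h ^ 2 - h * Dh s mu q h) / (s + mu * h)))
    with (((s + q * h ^ 2) ^ 2 - h ^ 2 * (Dh s mu q h * Dh s mu q h)) / ((s + mu * h) * (s + mu * h))) by (field; lra).
  rewrite H. field. lra. Qed.
Lemma R12_diff : R1 s mu q h - R2 s mu q h = 2 * h * Dh s mu q h / (s + mu * h).
Proof. unfold R1, R2. field. lra. Qed.
Lemma R1_gt1 : 1 < R1 s mu q h.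
Proof. unfold R1. pose proof Dh_gt_mu. pose proof (Rle_abs mu).
  apply Rmult_lt_reg_r with (s + mu * h); auto. unfold Rdiv. rewrite Rmult_assoc, Rinv_l by lra.
  assert (mu * h < h * Dh s mu q h) by nra. nra. Qed.
Lemma R2_pos : 0 < R2 s mu q h.
Proof. pose proof R12_prod. pose proof R1_gt1.
  assert (0 < (s - mu * h) / (s + mu * h)) by (apply Rdiv_lt_0_compat; auto). nra. Qed.
Lemma R2_lt_R1 : R2 s mu q h < R1 s mu q h.
Proof. pose proof R12_diff. pose proof Dh_pos.
  assert (0 < 2 * h * Dh s mu q h / (s + mu * h)) by (apply Rdiv_lt_0_compat; nra). lra. Qed.
Lemma P_factor z : (1 - R1 s mu q h * z) * (1 - R2 s mu q h * z) = Pz s mu q h z / (s + mu * h).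
Proof.
  replace ((1 - R1 s mu q h * z) * (1 - R2 s mu q h * z)) with
    (1 - (R1 s mu q h + R2 s mu q h) * z + (R1 s mu q h * R2 s mu q h) * z ^ 2) by ring.
  rewrite R12_sum, R12_prod. unfold Pz. field. lra.
Qed.
Lemma vv_gen z : R1 s mu q h * z <> 1 -> R2 s mu q h * z <> 1 ->
  (R1 s mu q h / (1 - R1 s mu q h * z) - R2 s mu q h / (1 - R2 s mu q h * z)) / Dh s mu q h
  = 2 * h / Pz s mu q h z.
Proof.
  intros H1 H2. pose proof Dh_pos.
  assert (HP : Pz s mu q h z = (s + mu * h) * ((1 - R1 s mu q h * z) * (1 - R2 s mu q h * z))).
  { rewrite P_factor. field. lra. }
  rewrite HP.
  replace (R1 s mu q h / (1 - R1 s mu q h * z) - R2 s mu q h / (1 - R2 s mu q h * z)) with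
    ((R1 s mu q h - R2 s mu q h) / ((1 - R1 s mu q h * z) * (1 - R2 s mu q h * z))) by (field; lra).
  rewrite R12_diff. field. repeat split; lra.
Qed.
End D3.

Section D4.
Variables s mu q h : R.
Hypothesis Hs : 0 < s.
Hypothesis Hq : 0 < q.
Hypothesis Hh : 0 < h.
Hypothesis Hp : 0 < s + mu * h.
Hypothesis Hm : 0 < s - mu * h.
Variable Wh : R -> R.
Hypothesis HWh : is_scale_Wh s mu q h Wh.

Let r1 := R1 s mu q h.
Let r2 := R2 s mu q h.
Let dh := Dh s mu q h.

Lemma lap_alg beta z : 0 < beta -> z = exp (- (beta * h)) -> psih s mu h beta - q <> 0 ->
  (exp (beta * h) - 1) / (beta * h * (psih s mu h beta - q)) * beta / (1 - z) = 2 * h / Pz s mu q h z.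
Proof.
  intros Hb Hz Hpsi.
  assert (Hz0 : 0 < z) by (subst; apply exp_pos).
  assert (Hz1 : z < 1) by (subst; rewrite <- exp_0; apply exp_increasing; nra).
  assert (HE : exp (beta * h) = / z) by (subst; rewrite exp_Ropp, Rinv_inv; auto).
  assert (HP : Pz s mu q h z = 2 * h ^ 2 * z * (psih s mu h beta - q)).
  { unfold psih, Pz. rewrite HE, <- Hz. field. split; lra. }
  rewrite HP, HE. field. repeat split; try lra.
Qed.

Lemma Wh_explicit : forall k, Wh (INR k * h) = vv s mu q h k.
Proof.
  destruct HWh as [Hneg [Hstep [[C [c Hexpo]] [Phih [[HP0 [_ HPmax]] Hlap]]]]].
  assert (Hr1 : 1 < R1 s mu q h) by (apply R1_gt1; auto).
  assert (Hr2 : 0 < R2 s mu q h) by (apply R2_pos; auto).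
  assert (Hr12 : R2 s mu q h < R1 s mu q h) by (apply R2_lt_R1; auto).
  assert (Hdh : 0 < Dh s mu q h) by (apply Dh_pos; auto).
  fold r1 r2 dh in Hr1, Hr2, Hr12, Hdh.
  assert (HC : 0 <= C).
  { specialize (Hexpo 0 (Rle_refl 0)). rewrite Rmult_0_r, exp_0 in Hexpo. pose proof (Rabs_pos (Wh 0)). lra. }
  set (rho := Rmax (exp (Rabs c * h)) r1).
  set (z1 := Rmin (/ (2 * r1)) (exp (- ((Phih + 1) * h)))).
  intro k.
  cut (Wh (INR k * h) - vv s mu q h k = 0). lra.
  apply (series_zero (fun k => Wh (INR k * h) - vv s mu q h k) (C + 2 * r1 / dh) rho z1).
  - unfold z1. apply Rmin_pos. apply Rinv_0_lt_compat; lra. apply exp_pos.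
  - unfold rho. eapply Rle_trans. 2: apply Rmax_r. lra.
  - assert (0 < 2 * r1 / dh) by (apply Rdiv_lt_0_compat; lra). lra.
  - intro j.
    assert (Hrj : 0 <= rho ^ j) by (apply pow_le; unfold rho; eapply Rle_trans; [|apply Rmax_r]; lra).
    unfold Rminus. eapply Rle_trans. apply Rabs_triang. rewrite Rabs_Ropp. rewrite Rmult_plus_distr_r.
    apply Rplus_le_compat.
    + eapply Rle_trans. apply Hexpo. pose proof (pos_INR j); nra.
      apply Rmult_le_compat_l; auto.
      apply Rle_trans with (exp (Rabs c * h) ^ j).
      { rewrite exp_powR. apply exp_le. pose proof (Rle_abs c). assert (0 <= INR j * h) by (pose proof (pos_INR j); nra).
        replace (INR j * (Rabs c * h)) with (Rabs c * (INR j * h)) by ring. apply Rmult_le_compat_r; auto. }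
      apply pow_incr. split. left; apply exp_pos. apply Rmax_l.
    + unfold vv. fold r1 r2 dh. unfold Rdiv. rewrite Rabs_mult, (Rabs_pos_eq (/ dh)) by (left; apply Rinv_0_lt_compat; lra).
      assert (r2 ^ S j <= r1 ^ S j) by (apply pow_incr; lra).
      assert (0 < r2 ^ S j) by (apply pow_lt; lra).
      rewrite Rabs_pos_eq by lra.
      assert (r1 ^ j <= rho ^ j) by (apply pow_incr; split; [lra| apply Rmax_r]).
      assert (0 < / dh) by (apply Rinv_0_lt_compat; lra).
      assert (0 < r1 ^ S j) by (apply pow_lt; lra).
      apply Rle_trans with (2 * r1 ^ S j * / dh). { apply Rmult_le_compat_r; lra. }
      replace (2 * r1 ^ S j * / dh) with (2 * r1 * / dh * r1 ^ j) by (simpl; ring).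
      apply Rmult_le_compat_l; auto. nra.
  - intros z [Hz0 Hz1] eps He.
    assert (Hzr : z <= / (2 * r1)) by (eapply Rle_trans; [left; exact Hz1| apply Rmin_l]).
    assert (Hzp : z < exp (- ((Phih + 1) * h))) by (eapply Rlt_le_trans; [exact Hz1| apply Rmin_r]).
    set (beta := - ln z / h).
    assert (Ezb : z = exp (- (beta * h))).
    { unfold beta. replace (- (- ln z / h * h)) with (ln z) by (field; lra). rewrite exp_ln; auto. }
    assert (Hbeta : Phih + 1 < beta).
    { unfold beta. assert (ln z < - ((Phih + 1) * h)).
      { rewrite <- (ln_exp (- ((Phih + 1) * h))). apply ln_increasing; auto. }
      apply Rmult_lt_reg_r with h; auto. replace (- ln z / h * h) with (- ln z) by (field; lra). lra. }
    assert (Hpsi : psih s mu h beta - q <> 0).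
    { intro E. assert (beta <= Phih) by (apply HPmax; lra). lra. }
    assert (Hz1' : z < 1) by (rewrite Ezb, <- exp_0; apply exp_increasing; nra).
    assert (Hr1z : r1 * z <= / 2).
    { apply Rle_trans with (r1 * / (2 * r1)). apply Rmult_le_compat_l; lra. right; field; lra. }
    destruct (Hlap beta ltac:(lra)) as [_ Hc].
    destruct (Hc (eps / 2 * (1 - z) / beta)) as [T0 HT0].
    { apply Rdiv_lt_0_compat. apply Rmult_lt_0_compat; lra. lra. }
    destruct (nat_above (T0 / h)) as [N1 [_ HN1]].
    assert (Sw : forall N, (N1 <= N)%nat ->
       Rabs (sumN (fun k => Wh (INR k * h) * z ^ k) N - 2 * h / Pz s mu q h z) < eps / 2).
    { intros N HN.
      assert (HT : T0 <= INR N * h).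
      { apply le_INR in HN. apply Rle_trans with (INR N1 * h). 2: nra.
        apply Rmult_lt_compat_r with (r := h) in HN1; auto. replace (T0 / h * h) with T0 in HN1 by (field; lra). lra. }
      specialize (HT0 _ HT).
      destruct (step_int h Wh Hh Hstep (fun y => exp (- (beta * y))) N) as [Hex Hint].
      { c0. }
      rewrite Rint_RInt in HT0 by exact Hex. rewrite Hint in HT0.
      rewrite (sumN_ext _ (fun k => (1 - z) / beta * (Wh (INR k * h) * z ^ k))) in HT0.
      2:{ intros j _. rewrite (RInt_extR _ (fun y => exp ((- beta) * y))) by (intros; f_equal; ring).
          rewrite RInt_expc by lra. rewrite Ezb, exp_powR.
          replace (exp (- beta * ((INR j + 1) * h))) with (exp (INR j * - (beta * h)) * exp (- (beta * h)))
            by (rewrite <- exp_plus; f_equal; ring).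
          replace (exp (- beta * (INR j * h))) with (exp (INR j * - (beta * h))) by (f_equal; ring).
          field. lra. }
      rewrite sumN_scal in HT0.
      rewrite <- (lap_alg beta z) by lra.
      set (S := sumN (fun k => Wh (INR k * h) * z ^ k) N) in *.
      set (L := (exp (beta * h) - 1) / (beta * h * (psih s mu h beta - q))) in *.
      replace (S - L * beta / (1 - z)) with (beta / (1 - z) * ((1 - z) / beta * S - L)) by (field; lra).
      rewrite Rabs_mult, Rabs_pos_eq by (apply Rlt_le, Rdiv_lt_0_compat; lra).
      apply Rmult_lt_reg_l with ((1 - z) / beta). apply Rdiv_lt_0_compat; lra.
      replace ((1 - z) / beta * (beta / (1 - z) * Rabs ((1 - z) / beta * S - L))) with (Rabs ((1 - z) / beta * S - L)) by (field; lra).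
      replace ((1 - z) / beta * (eps / 2)) with (eps / 2 * (1 - z) / beta) by (field; lra). auto. }
    destruct (pow_lt_1_zero (r1 * z) ltac:(rewrite Rabs_pos_eq; nra) (eps * dh / (8 * r1))) as [N2 HN2].
    { apply Rdiv_lt_0_compat; nra. }
    assert (Sv : forall N, (N2 <= N)%nat ->
       Rabs (sumN (fun k => vv s mu q h k * z ^ k) N - 2 * h / Pz s mu q h z) < eps / 2).
    { intros N HN.
      rewrite <- (vv_gen s mu q h) by (auto; fold r1 r2; nra). fold r1 r2 dh.
      rewrite (sumN_ext _ (fun k => / dh * (r1 * (r1 * z) ^ k) + (- / dh) * (r2 * (r2 * z) ^ k))).
      2:{ intros j _. unfold vv. fold r1 r2 dh. rewrite !Rpow_mult_distr. simpl. field. lra. }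
      rewrite sumN_plus, !sumN_scal, !sumN_geom by nra.
      specialize (HN2 N HN). rewrite Rabs_pos_eq in HN2 by (apply pow_le; nra).
      assert (Hp2 : (r2 * z) ^ N <= (r1 * z) ^ N) by (apply pow_incr; nra).
      assert (0 <= (r2 * z) ^ N) by (apply pow_le; nra).
      set (u := (r1 * z) ^ N) in *. set (v := (r2 * z) ^ N) in *.
      replace (/ dh * (r1 * ((1 - u) / (1 - r1 * z))) + - / dh * (r2 * ((1 - v) / (1 - r2 * z))) -
         (r1 / (1 - r1 * z) - r2 / (1 - r2 * z)) / dh)
        with (- (r1 * u / (1 - r1 * z) / dh) + r2 * v / (1 - r2 * z) / dh) by (field; repeat split; nra).
      eapply Rle_lt_trans. apply Rabs_triang. rewrite Rabs_Ropp.
      assert (B1 : r1 * u / (1 - r1 * z) / dh <= 2 * r1 * u / dh).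
      { unfold Rdiv. apply Rmult_le_compat_r. left; apply Rinv_0_lt_compat; lra.
        apply Rle_trans with (r1 * u * 2). apply Rmult_le_compat_l. nra.
        apply Rle_trans with (/ / 2). apply Rinv_le_contravar; lra. lra. lra. }
      assert (B2 : r2 * v / (1 - r2 * z) / dh <= 2 * r1 * u / dh).
      { unfold Rdiv. apply Rmult_le_compat_r. left; apply Rinv_0_lt_compat; lra.
        apply Rle_trans with (r1 * u * 2). 2: lra.
        apply Rle_trans with (r2 * v * 2). apply Rmult_le_compat_l. nra.
        apply Rle_trans with (/ / 2). apply Rinv_le_contravar; nra. lra. nra. }
      rewrite !Rabs_pos_eq.
      2,3: unfold Rdiv; apply Rmult_le_pos; [apply Rmult_le_pos|]; try (left; apply Rinv_0_lt_compat); nra.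
      assert (2 * r1 * u / dh < eps / 4).
      { apply Rmult_lt_reg_r with (dh / (2 * r1)). apply Rdiv_lt_0_compat; lra.
        replace (2 * r1 * u / dh * (dh / (2 * r1))) with u by (field; lra).
        replace (eps / 4 * (dh / (2 * r1))) with (eps * dh / (8 * r1)) by (field; lra). auto. }
      lra. }
    exists (max N1 N2). intros N HN.
    rewrite (sumN_ext _ (fun k => Wh (INR k * h) * z ^ k - vv s mu q h k * z ^ k)) by (intros; ring).
    rewrite sumN_minus.
    specialize (Sw N ltac:(lia)). specialize (Sv N ltac:(lia)).
    set (A := sumN (fun k => Wh (INR k * h) * z ^ k) N) in *.
    set (B := sumN (fun k => vv s mu q h k * z ^ k) N) in *.
    replace (A - B) with ((A - 2 * h / Pz s mu q h z) - (B - 2 * h / Pz s mu q h z)) by ring.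
    eapply Rle_lt_trans. apply Rabs_triang. rewrite Rabs_Ropp. lra.
Qed.
End D4.

Lemma mvt_bound g dg Y M n : 0 <= M -> (forall t, is_derive g t (dg t)) -> g 0 = 0 ->
  (forall t, Rabs t <= Y -> Rabs (dg t) <= M * Rabs t ^ n) ->
  forall y, Rabs y <= Y -> Rabs (g y) <= M * Rabs y ^ S n.
Proof.
  intros HM Hd H0 Hb y Hy.
  destruct (MVT_gen g 0 y dg) as [c [Hc E]].
  - intros; auto.
  - intros. apply continuity_pt_filterlim. apply (ex_derive_continuous (K:=R_AbsRing) (V:=R_NormedModule)).
    eexists; apply Hd.
  - rewrite H0, Rminus_0_r, Rminus_0_r in E. rewrite E.
    assert (Rabs c <= Rabs y).
    { unfold Rmin, Rmax in Hc. destruct (Rle_dec 0 y); unfold Rabs; repeat destruct Rcase_abs; lra. }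
    rewrite Rabs_mult. simpl.
    assert (Rabs (dg c) <= M * Rabs y ^ n).
    { eapply Rle_trans. apply Hb. lra. apply Rmult_le_compat_l; auto. apply pow_incr. split; auto. apply Rabs_pos. }
    pose proof (Rabs_pos (dg c)). pose proof (Rabs_pos y). nra.
Qed.

Definition g1 t := exp t - 1.
Definition g2 t := exp t - 1 - t.
Definition g3 t := exp t - 1 - t - t ^ 2 / 2.
Definition g4 t := exp t - 1 - t - t ^ 2 / 2 - t ^ 3 / 6.

Lemma g_bounds : forall t, Rabs t <= 1 ->
  Rabs (g2 t) <= 3 * Rabs t ^ 2 /\ Rabs (g3 t) <= 3 * Rabs t ^ 3 /\ Rabs (g4 t) <= 3 * Rabs t ^ 4.
Proof.
  assert (B0 : forall t, Rabs t <= 1 -> Rabs (exp t) <= 3 * Rabs t ^ 0).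
  { intros t Ht. simpl. rewrite Rabs_pos_eq by (left; apply exp_pos). rewrite Rmult_1_r.
    eapply Rle_trans. apply exp_le. apply Rle_trans with (Rabs t). apply Rle_abs. exact Ht. apply exp_le_3. }
  assert (B1 : forall t, Rabs t <= 1 -> Rabs (g1 t) <= 3 * Rabs t ^ 1).
  { apply (mvt_bound g1 exp 1 3 0); try lra; auto. intro; unfold g1; auto_derive; auto. toR; ring. unfold g1; rewrite exp_0; toR; ring. }
  assert (B2 : forall t, Rabs t <= 1 -> Rabs (g2 t) <= 3 * Rabs t ^ 2).
  { apply (mvt_bound g2 g1 1 3 1); try lra; auto. intro; unfold g1, g2; auto_derive; auto; toR; ring. unfold g2; rewrite exp_0; toR; ring. }
  assert (B3 : forall t, Rabs t <= 1 -> Rabs (g3 t) <= 3 * Rabs t ^ 3).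
  { apply (mvt_bound g3 g2 1 3 2); try lra; auto. intro; unfold g3, g2; auto_derive; auto; toR; field. unfold g3; rewrite exp_0; toR; field. }
  assert (B4 : forall t, Rabs t <= 1 -> Rabs (g4 t) <= 3 * Rabs t ^ 4).
  { apply (mvt_bound g4 g3 1 3 3); try lra; auto. intro; unfold g4, g3; auto_derive; auto; toR; field. unfold g4; rewrite exp_0; toR; field. }
  intros t Ht. auto.
Qed.

Section E2.
Variables s mu q : R.
Hypothesis Hs : 0 < s.
Hypothesis Hq : 0 < q.
Let a := alpha_plus s mu q.
Let b := alpha_minus s mu q.
Let D := Dd s mu q.

Definition h0 := Rmin (Rmin (Rmin 1 (s / (2 * Rabs mu + 1)))
   (Rmin (1 / (alpha_plus s mu q + 1)) (1 / (- alpha_minus s mu q + 1)))) ((Dd s mu q + mu) / (2 * q)).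

Lemma h0_pos : 0 < h0.
Proof.
  pose proof (ap_pos s mu q Hs Hq). pose proof (am_neg s mu q Hs Hq). pose proof (Dd_gt_mu s mu q Hs Hq).
  pose proof (Rle_abs (- mu)). rewrite Rabs_Ropp in H2. pose proof (Rabs_pos mu).
  unfold h0. repeat apply Rmin_pos; try apply Rdiv_lt_0_compat; lra.
Qed.

Lemma h0_props h : 0 < h < h0 ->
  h <= 1 /\ Rabs mu * h <= s / 2 /\ a * h <= 1 /\ - b * h <= 1 /\ q * h <= (D + mu) / 2.
Proof.
  intros [H0 H1]. pose proof (ap_pos s mu q Hs Hq). pose proof (am_neg s mu q Hs Hq). fold a b in H, H2.
  pose proof (Rabs_pos mu).
  unfold h0 in H1. fold a b D in H1.
  apply Rlt_le in H1.
  pose proof (Rle_trans _ _ _ H1 (Rmin_l _ _)) as H4. pose proof (Rle_trans _ _ _ H1 (Rmin_r _ _)) as H5.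
  pose proof (Rle_trans _ _ _ H4 (Rmin_l _ _)) as H6. pose proof (Rle_trans _ _ _ H4 (Rmin_r _ _)) as H7.
  pose proof (Rle_trans _ _ _ H6 (Rmin_r _ _)) as H8.
  pose proof (Rle_trans _ _ _ H6 (Rmin_l _ _)) as A1.
  pose proof (Rle_trans _ _ _ H7 (Rmin_l _ _)) as H9. pose proof (Rle_trans _ _ _ H7 (Rmin_r _ _)) as H10.
  repeat split; auto.
  - apply Rle_trans with (Rabs mu * (s / (2 * Rabs mu + 1))). apply Rmult_le_compat_l; auto.
    set (x := s / (2 * Rabs mu + 1)).
    assert (Hx : x * (2 * Rabs mu + 1) = s) by (unfold x; field; lra).
    assert (0 <= x) by (unfold x; apply Rlt_le, Rdiv_lt_0_compat; lra). nra.
  - apply Rle_trans with (a * (1 / (a + 1))). apply Rmult_le_compat_l; lra.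
    apply Rmult_le_reg_r with (a + 1). lra. field_simplify; lra.
  - apply Rle_trans with (- b * (1 / (- b + 1))). apply Rmult_le_compat_l; lra.
    apply Rmult_le_reg_r with (- b + 1). lra. field_simplify; lra.
  - apply Rle_trans with (q * ((D + mu) / (2 * q))). apply Rmult_le_compat_l; lra. right. field. lra.
Qed.

Lemma psih_err beta h : 0 < h -> Rabs (beta * h) <= 1 ->
  Rabs (psih s mu h beta - psi s mu beta) <= (3 * Rabs mu * Rabs beta ^ 3 + 3 * s * Rabs beta ^ 4) * h ^ 2.
Proof.
  intros Hh Hy. set (y := beta * h) in *.
  assert (E : psih s mu h beta - psi s mu beta = mu * (g3 y - g3 (- y)) / (2 * h) + s * (g4 y + g4 (- y)) / (2 * h ^ 2)).
  { unfold psih, psi, g3, g4, y. field. lra. }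
  rewrite E. destruct (g_bounds y Hy) as [_ [B3 B4]]. assert (Rabs (- y) <= 1) by (rewrite Rabs_Ropp; auto).
  destruct (g_bounds (- y) H) as [_ [B3' B4']]. rewrite Rabs_Ropp in B3', B4'.
  assert (Ey : Rabs y = Rabs beta * h) by (unfold y; rewrite Rabs_mult, (Rabs_pos_eq h); lra).
  rewrite Ey in *.
  eapply Rle_trans. apply Rabs_triang. unfold Rdiv. rewrite !Rabs_mult.
  rewrite (Rabs_pos_eq s), (Rabs_pos_eq (/ (2 * h))), (Rabs_pos_eq (/ (2 * h ^ 2))) by
    (try lra; left; apply Rinv_0_lt_compat; nra).
  assert (Rabs (g3 y - g3 (- y)) <= 6 * (Rabs beta * h) ^ 3).
  { unfold Rminus. eapply Rle_trans. apply Rabs_triang. rewrite Rabs_Ropp. lra. }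
  assert (Rabs (g4 y + g4 (- y)) <= 6 * (Rabs beta * h) ^ 4).
  { eapply Rle_trans. apply Rabs_triang. lra. }
  pose proof (Rabs_pos mu). pose proof (Rabs_pos beta).
  apply Rle_trans with (Rabs mu * (6 * (Rabs beta * h) ^ 3) * / (2 * h) + s * (6 * (Rabs beta * h) ^ 4) * / (2 * h ^ 2)).
  - apply Rplus_le_compat; apply Rmult_le_compat_r; try (left; apply Rinv_0_lt_compat; nra);
      apply Rmult_le_compat_l; lra.
  - right. field. lra.
Qed.

Lemma f_at_exp beta h : 0 < h -> 0 < s + mu * h -> 0 < s - mu * h ->
  (s + mu * h) * (exp (beta * h) - R1 s mu q h) * (exp (beta * h) - R2 s mu q h)
  = 2 * h ^ 2 * exp (beta * h) * (psih s mu h beta - q).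
Proof.
  intros Hh Hp Hm. set (E := exp (beta * h)).
  replace ((s + mu * h) * (E - R1 s mu q h) * (E - R2 s mu q h)) with
    ((s + mu * h) * (E * E - (R1 s mu q h + R2 s mu q h) * E + R1 s mu q h * R2 s mu q h)) by ring.
  rewrite (R12_sum s mu q h Hp), (R12_prod s mu q h Hq Hp Hm). unfold psih. fold E.
  rewrite exp_Ropp. fold E. assert (0 < E) by apply exp_pos. field. lra.
Qed.
End E2.

Section E3.
Variables s mu q : R.
Hypothesis Hs : 0 < s.
Hypothesis Hq : 0 < q.
Let a := alpha_plus s mu q.
Let b := alpha_minus s mu q.
Let D := Dd s mu q.

Lemma basic h : 0 < h < h0 s mu q ->
  h <= 1 /\ s / 2 <= s + mu * h <= 3 * s / 2 /\ s / 2 <= s - mu * h <= 3 * s / 2 /\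
  a * h <= 1 /\ - b * h <= 1 /\ q * h <= (D + mu) / 2.
Proof.
  intros Hh. destruct (h0_props s mu q Hs Hq h Hh) as [A [B [C [E F]]]].
  pose proof (Rle_abs mu). pose proof (Rle_abs (- mu)). rewrite Rabs_Ropp in H0.
  repeat split; auto; nra.
Qed.

Lemma one_m_R2 h : 0 < h < h0 s mu q -> h * (D + mu) / (3 * s) <= 1 - R2 s mu q h.
Proof.
  intros Hh. destruct (basic h Hh) as [A [[B1 B2] [[C1 C2] [E [F G]]]]].
  pose proof (Dh_ge_D s mu q h). fold D in H.
  assert (E1 : 1 - R2 s mu q h = h * (mu + Dh s mu q h - q * h) / (s + mu * h)) by (unfold R2; field; lra).
  rewrite E1. pose proof (Dd_gt_mu s mu q Hs Hq). fold D in H0. pose proof (Rle_abs (- mu)). rewrite Rabs_Ropp in H1.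
  unfold Rdiv. apply Rle_trans with (h * ((D + mu) / 2) * / (3 * s / 2)).
  - right. field. lra.
  - apply Rmult_le_compat. nra. left; apply Rinv_0_lt_compat; lra. nra. apply Rinv_le_contravar; lra.
Qed.

Lemma R1_m_one h : 0 < h < h0 s mu q -> h * (D - mu) / (3 * s) <= R1 s mu q h - 1.
Proof.
  intros Hh. destruct (basic h Hh) as [A [[B1 B2] [[C1 C2] [E [F G]]]]].
  pose proof (Dh_ge_D s mu q h). fold D in H.
  assert (E1 : R1 s mu q h - 1 = h * (q * h + Dh s mu q h - mu) / (s + mu * h)) by (unfold R1; field; lra).
  rewrite E1. pose proof (Dd_gt_mu s mu q Hs Hq). fold D in H0. pose proof (Rle_abs mu).
  unfold Rdiv. apply Rle_trans with (h * (D - mu) * / (3 * s / 2)).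
  - apply Rmult_le_compat_l. nra. apply Rinv_le_contravar. lra. lra.
  - apply Rmult_le_compat. nra. left; apply Rinv_0_lt_compat; lra. assert (0 < q * h) by nra. nra. apply Rinv_le_contravar; lra.
Qed.

Definition Ca := 3 * Rabs mu * Rabs a ^ 3 + 3 * s * Rabs a ^ 4.
Definition Cb := 3 * Rabs mu * Rabs b ^ 3 + 3 * s * Rabs b ^ 4.

Lemma psi_root_b : psi s mu b = q.
Proof. assert (H : psi s mu b - q = s / 2 * (b - a) * (b - b)) by (apply psi_fact; auto). rewrite Rminus_diag, Rmult_0_r in H. lra. Qed.

Lemma root_a h : 0 < h < h0 s mu q -> Rabs (exp (a * h) - R1 s mu q h) <= 36 * Ca / (D + mu) * h ^ 3.
Proof.
  intros Hh. destruct (basic h Hh) as [A [[B1 B2] [[C1 C2] [E [F G]]]]].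
  pose proof (ap_pos s mu q Hs Hq). fold a in H.
  pose proof (Dd_gt_mu s mu q Hs Hq). fold D in H0. pose proof (Rle_abs (- mu)). rewrite Rabs_Ropp in H1.
  assert (Ef : (s + mu * h) * (exp (a * h) - R1 s mu q h) * (exp (a * h) - R2 s mu q h)
      = 2 * h ^ 2 * exp (a * h) * (psih s mu h a - q)) by (apply f_at_exp; auto; lra).
  assert (H2 : psi s mu a = q) by (apply psi_root_a; auto).
  assert (Hy : Rabs (a * h) <= 1) by (rewrite Rabs_pos_eq; nra).
  assert (Herr : Rabs (psih s mu h a - psi s mu a) <= (3 * Rabs mu * Rabs a ^ 3 + 3 * s * Rabs a ^ 4) * h ^ 2)
    by (apply psih_err; lra). rewrite H2 in Herr. fold (Ca) in Herr.
  assert (HE : exp (a * h) <= 3) by (eapply Rle_trans; [apply exp_le; exact E|apply exp_le_3]).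
  assert (HE1 : 1 <= exp (a * h)) by (rewrite <- exp_0; apply exp_le; nra).
  pose proof (one_m_R2 h Hh) as H3.
  assert (Hd : h * (D + mu) / (3 * s) <= exp (a * h) - R2 s mu q h) by lra.
  assert (Hpos : 0 < h * (D + mu) / (3 * s)) by (apply Rdiv_lt_0_compat; nra).
  assert (HCa : 0 <= Ca) by (unfold Ca; pose proof (Rabs_pos mu); pose proof (Rabs_pos a);
     assert (0 <= Rabs a ^ 3) by (apply pow_le; lra); assert (0 <= Rabs a ^ 4) by (apply pow_le; lra); nra).
  assert (Hprod : Rabs (exp (a * h) - R1 s mu q h) * ((s + mu * h) * (exp (a * h) - R2 s mu q h)) <= 6 * Ca * h ^ 4).
  { replace (Rabs (exp (a * h) - R1 s mu q h) * ((s + mu * h) * (exp (a * h) - R2 s mu q h)))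
      with (Rabs ((s + mu * h) * (exp (a * h) - R1 s mu q h) * (exp (a * h) - R2 s mu q h))).
    2:{ rewrite !Rabs_mult, (Rabs_pos_eq (s + mu * h)), (Rabs_pos_eq (exp (a * h) - R2 s mu q h)) by lra. ring. }
    rewrite Ef. rewrite !Rabs_mult. rewrite (Rabs_pos_eq 2), (Rabs_pos_eq (h ^ 2)), (Rabs_pos_eq (exp (a * h))) by
       (try lra; apply pow_le; lra).
    assert (0 <= h ^ 2) by (apply pow_le; lra).
    apply Rle_trans with (2 * h ^ 2 * 3 * (Ca * h ^ 2)).
    apply Rmult_le_compat; try nra. apply Rabs_pos. right; ring. }
  assert (Hlow : h * (D + mu) / 6 <= (s + mu * h) * (exp (a * h) - R2 s mu q h)).
  { apply Rle_trans with (s / 2 * (h * (D + mu) / (3 * s))). right; field; lra.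
    apply Rmult_le_compat; lra. }
  assert (Hlp : 0 < h * (D + mu) / 6) by (apply Rdiv_lt_0_compat; nra).
  pose proof (Rabs_pos (exp (a * h) - R1 s mu q h)).
  assert (Rabs (exp (a * h) - R1 s mu q h) * (h * (D + mu) / 6) <= 6 * Ca * h ^ 4) by nra.
  apply Rmult_le_reg_r with (h * (D + mu) / 6); auto.
  replace (36 * Ca / (D + mu) * h ^ 3 * (h * (D + mu) / 6)) with (6 * Ca * h ^ 4) by (field; lra). auto.
Qed.

Lemma root_b h : 0 < h < h0 s mu q -> Rabs (exp (b * h) - R2 s mu q h) <= 12 * Cb / (D - mu) * h ^ 3.
Proof.
  intros Hh. destruct (basic h Hh) as [A [[B1 B2] [[C1 C2] [E [F G]]]]].
  pose proof (am_neg s mu q Hs Hq). fold b in H.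
  pose proof (Dd_gt_mu s mu q Hs Hq). fold D in H0. pose proof (Rle_abs mu).
  assert (Ef : (s + mu * h) * (exp (b * h) - R1 s mu q h) * (exp (b * h) - R2 s mu q h)
      = 2 * h ^ 2 * exp (b * h) * (psih s mu h b - q)) by (apply f_at_exp; auto; lra).
  pose proof psi_root_b as H2.
  assert (Hy : Rabs (b * h) <= 1) by (rewrite Rabs_left; nra).
  assert (Herr : Rabs (psih s mu h b - psi s mu b) <= (3 * Rabs mu * Rabs b ^ 3 + 3 * s * Rabs b ^ 4) * h ^ 2)
    by (apply psih_err; lra). rewrite H2 in Herr. fold (Cb) in Herr.
  assert (HE : exp (b * h) <= 1) by (rewrite <- exp_0; apply exp_le; nra).
  assert (HE0 : 0 < exp (b * h)) by apply exp_pos.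
  pose proof (R1_m_one h Hh) as H3.
  assert (Hd : h * (D - mu) / (3 * s) <= R1 s mu q h - exp (b * h)) by lra.
  assert (Hpos : 0 < h * (D - mu) / (3 * s)) by (apply Rdiv_lt_0_compat; nra).
  assert (HCb : 0 <= Cb) by (unfold Cb; pose proof (Rabs_pos mu); pose proof (Rabs_pos b);
     assert (0 <= Rabs b ^ 3) by (apply pow_le; lra); assert (0 <= Rabs b ^ 4) by (apply pow_le; lra); nra).
  assert (Hprod : Rabs (exp (b * h) - R2 s mu q h) * ((s + mu * h) * (R1 s mu q h - exp (b * h))) <= 2 * Cb * h ^ 4).
  { replace (Rabs (exp (b * h) - R2 s mu q h) * ((s + mu * h) * (R1 s mu q h - exp (b * h))))
      with (Rabs ((s + mu * h) * (exp (b * h) - R1 s mu q h) * (exp (b * h) - R2 s mu q h))).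
    2:{ rewrite !Rabs_mult, (Rabs_pos_eq (s + mu * h)) by lra.
        rewrite (Rabs_minus_sym (exp (b * h))), (Rabs_pos_eq (R1 s mu q h - exp (b * h))) by lra. ring. }
    rewrite Ef. rewrite !Rabs_mult. rewrite (Rabs_pos_eq 2), (Rabs_pos_eq (h ^ 2)), (Rabs_pos_eq (exp (b * h))) by
       (try lra; apply pow_le; lra).
    assert (0 <= h ^ 2) by (apply pow_le; lra).
    apply Rle_trans with (2 * h ^ 2 * 1 * (Cb * h ^ 2)).
    apply Rmult_le_compat; try nra. apply Rabs_pos. right; ring. }
  assert (Hlow : h * (D - mu) / 6 <= (s + mu * h) * (R1 s mu q h - exp (b * h))).
  { apply Rle_trans with (s / 2 * (h * (D - mu) / (3 * s))). right; field; lra.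
    apply Rmult_le_compat; lra. }
  assert (Hlp : 0 < h * (D - mu) / 6) by (apply Rdiv_lt_0_compat; nra).
  pose proof (Rabs_pos (exp (b * h) - R2 s mu q h)).
  assert (Rabs (exp (b * h) - R2 s mu q h) * (h * (D - mu) / 6) <= 2 * Cb * h ^ 4) by nra.
  apply Rmult_le_reg_r with (h * (D - mu) / 6); auto.
  replace (12 * Cb / (D - mu) * h ^ 3 * (h * (D - mu) / 6)) with (2 * Cb * h ^ 4) by (field; lra). auto.
Qed.
End E3.

Section E4.
Variables s mu q : R.
Hypothesis Hs : 0 < s.
Hypothesis Hq : 0 < q.
Let a := alpha_plus s mu q.
Let b := alpha_minus s mu q.
Let D := Dd s mu q.

Definition u1 := 1 / (alpha_plus s mu q * Dd s mu q).
Definition u2 := 1 / (alpha_minus s mu q * Dd s mu q).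
Definition v1 h := h * R1 s mu q h / ((R1 s mu q h - 1) * Dh s mu q h).
Definition v2 h := h * R2 s mu q h / ((R2 s mu q h - 1) * Dh s mu q h).

Lemma u_diff : u1 - u2 = 1 / q.
Proof.
  pose proof (ap_pos s mu q Hs Hq). pose proof (am_neg s mu q Hs Hq). pose proof (Dd_pos s mu q Hs Hq).
  assert (E1 : a - b = 2 * D / s) by (apply ab_diff; auto).
  assert (E2 : a * b = - 2 * q / s) by (apply ab_prod; auto).
  unfold u1, u2. fold a b D. fold a in H. fold b in H0. fold D in H1.
  replace (1 / (a * D) - 1 / (b * D)) with ((b - a) / ((a * b) * D)) by (field; repeat split; lra).
  rewrite E2. replace (b - a) with (- (2 * D / s)) by lra. field. repeat split; lra.
Qed.

Lemma v_diff h : 0 < h < h0 s mu q -> v1 h - v2 h = 1 / q.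
Proof.
  intros Hh. destruct (basic s mu q Hs Hq h Hh) as [A [[B1 B2] [[C1 C2] [E [F G]]]]].
  pose proof (R1_m_one s mu q Hs Hq h Hh). pose proof (one_m_R2 s mu q Hs Hq h Hh).
  pose proof (Dd_gt_mu s mu q Hs Hq) as H2. fold D in H2, H, H0. pose proof (Rle_abs mu). pose proof (Rle_abs (- mu)). rewrite Rabs_Ropp in H3.
  assert (0 < h * (D - mu) / (3 * s)) by (apply Rdiv_lt_0_compat; nra).
  assert (0 < h * (D + mu) / (3 * s)) by (apply Rdiv_lt_0_compat; nra).
  assert (Hdh : 0 < Dh s mu q h) by (apply Dh_pos; lra).
  assert (Es : R1 s mu q h + R2 s mu q h = 2 * (s + q * h ^ 2) / (s + mu * h)) by (apply R12_sum; lra).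
  assert (Ep : R1 s mu q h * R2 s mu q h = (s - mu * h) / (s + mu * h)) by (apply R12_prod; lra).
  assert (Ed : R1 s mu q h - R2 s mu q h = 2 * h * Dh s mu q h / (s + mu * h)) by (apply R12_diff; lra).
  set (r1 := R1 s mu q h) in *. set (r2 := R2 s mu q h) in *. set (dh := Dh s mu q h) in *.
  unfold v1, v2. fold r1 r2 dh.
  assert (Epr : (r1 - 1) * (r2 - 1) = - 2 * q * h ^ 2 / (s + mu * h)).
  { replace ((r1 - 1) * (r2 - 1)) with (r1 * r2 - (r1 + r2) + 1) by ring. rewrite Ep, Es. field. lra. }
  replace (h * r1 / ((r1 - 1) * dh) - h * r2 / ((r2 - 1) * dh)) with (h * (r2 - r1) / (((r1 - 1) * (r2 - 1)) * dh))
    by (field; repeat split; lra).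
  rewrite Epr. replace (r2 - r1) with (- (2 * h * dh / (s + mu * h))) by lra. field. repeat split; lra.
Qed.

Definition Kn := 13 / 2 * alpha_plus s mu q ^ 3 + 2 * (36 * Ca s mu q / (Dd s mu q + mu)).
Definition Kdel := (3 * s * Kn / (2 * alpha_plus s mu q * (Dd s mu q - mu))) / Dd s mu q
   + (1 / alpha_plus s mu q + 1 / 2) * q ^ 2 / (2 * Dd s mu q ^ 3).

Lemma delta_est h : 0 < h < h0 s mu q -> Rabs (v1 h - u1 - h / (2 * D)) <= Kdel * h ^ 2.
Proof.
  intros Hh. destruct (basic s mu q Hs Hq h Hh) as [A [[B1 B2] [[C1 C2] [E [F G]]]]].
  pose proof (R1_m_one s mu q Hs Hq h Hh) as HR1. pose proof (root_a s mu q Hs Hq h Hh) as Hra.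
  pose proof (Dd_gt_mu s mu q Hs Hq) as H. fold D in H, HR1, Hra, G. pose proof (Rle_abs mu). pose proof (Rle_abs (- mu)). rewrite Rabs_Ropp in H1.
  pose proof (ap_pos s mu q Hs Hq) as Ha. fold a in Ha, Hra, HR1, E.
  assert (Hdh : 0 < Dh s mu q h) by (apply Dh_pos; lra).
  assert (HdD : D <= Dh s mu q h) by apply Dh_ge_D.
  assert (HD : 0 < D) by (apply Dd_pos; auto).
  assert (HCa : 0 <= Ca s mu q) by (unfold Ca; pose proof (Rabs_pos mu); pose proof (Rabs_pos (alpha_plus s mu q));
     assert (0 <= Rabs (alpha_plus s mu q) ^ 3) by (apply pow_le; lra); assert (0 <= Rabs (alpha_plus s mu q) ^ 4) by (apply pow_le; lra); nra).
  set (r1 := R1 s mu q h) in *. set (dh := Dh s mu q h) in *.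
  set (Ka := 36 * Ca s mu q / (D + mu)) in *.
  assert (HKa : 0 <= Ka) by (unfold Ka; apply Rmult_le_pos; [lra|left; apply Rinv_0_lt_compat; lra]).
  set (y := a * h).
  assert (Hy : 0 <= y <= 1) by (unfold y; split; nra).
  assert (Hr1 : h * (D - mu) / (3 * s) <= r1 - 1) by auto.
  assert (Hr1p : 0 < r1 - 1) by (assert (0 < h * (D - mu) / (3 * s)) by (apply Rdiv_lt_0_compat; nra); lra).
  set (Nr := (y - 2) * r1 + 2 + y).
  assert (HN : Rabs Nr <= Kn * h ^ 3).
  { assert (EN : Nr = (y - 2) * g3 y + y ^ 3 / 2 + (y - 2) * (r1 - exp y)).
    { unfold Nr, g3. field. }
    destruct (g_bounds y ltac:(rewrite Rabs_pos_eq; lra)) as [_ [B3 _]]. rewrite (Rabs_pos_eq y) in B3 by lra.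
    rewrite EN. eapply Rle_trans. apply Rabs_triang. eapply Rle_trans. apply Rplus_le_compat_r. apply Rabs_triang.
    rewrite !Rabs_mult. rewrite (Rabs_left1 (y - 2)) by lra. rewrite (Rabs_pos_eq (y ^ 3 / 2)) by (apply Rmult_le_pos; [apply pow_le|]; lra).
    rewrite Rabs_minus_sym. change (exp y) with (exp (a * h)).
    assert (Rabs (g3 y) <= 3 * y ^ 3) by auto.
    assert (y ^ 3 = a ^ 3 * h ^ 3) by (unfold y; ring).
    unfold Kn. fold a D. fold Ka.
    assert (0 <= h ^ 3) by (apply pow_le; lra). assert (0 <= y ^ 3) by (apply pow_le; lra).
    pose proof (Rabs_pos (g3 y)).
    assert (- (y - 2) * Rabs (g3 y) <= 2 * (3 * y ^ 3)) by nra.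
    assert (- (y - 2) * Rabs (exp (a * h) - r1) <= 2 * (Ka * h ^ 3)).
    { pose proof (Rabs_pos (exp (a * h) - r1)). apply Rmult_le_compat; lra. }
    nra. }
  assert (HA : Rabs (h * r1 / (r1 - 1) - 1 / a - h / 2) <= 3 * s * Kn / (2 * a * (D - mu)) * h ^ 2).
  { replace (h * r1 / (r1 - 1) - 1 / a - h / 2) with (Nr / (2 * a * (r1 - 1))) by (unfold Nr, y; field; lra).
    unfold Rdiv at 1. rewrite Rabs_mult, (Rabs_pos_eq (/ _)) by (left; apply Rinv_0_lt_compat; nra).
    apply Rle_trans with (Kn * h ^ 3 * / (2 * a * (h * (D - mu) / (3 * s)))).
    - apply Rmult_le_compat; auto. apply Rabs_pos. left; apply Rinv_0_lt_compat; nra.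
      apply Rinv_le_contravar. apply Rmult_lt_0_compat. lra. apply Rdiv_lt_0_compat; nra. nra.
    - right. field. repeat split; lra. }
  assert (HDd : Rabs (1 / dh - 1 / D) <= q ^ 2 * h ^ 2 / (2 * D ^ 3)).
  { assert (Esq : dh * dh - D * D = q ^ 2 * h ^ 2).
    { unfold dh, D. rewrite Dh_sq, Dd_sq by lra. ring. }
    replace (1 / dh - 1 / D) with (- ((dh * dh - D * D) / (dh * D * (dh + D)))) by (field; repeat split; lra).
    rewrite Rabs_Ropp, Esq.
    assert (0 < dh * D * (dh + D)) by (apply Rmult_lt_0_compat; [apply Rmult_lt_0_compat|]; lra).
    assert (0 <= q ^ 2 * h ^ 2) by (apply Rmult_le_pos; apply pow_le; lra).
    rewrite Rabs_pos_eq by (apply Rmult_le_pos; [lra|left; apply Rinv_0_lt_compat; lra]).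
    unfold Rdiv. apply Rmult_le_compat_l. apply Rmult_le_pos; apply pow_le; lra.
    apply Rinv_le_contravar. apply Rmult_lt_0_compat; [lra| apply pow_lt; lra].
    replace (2 * D ^ 3) with (D * D * (D + D)) by ring. apply Rmult_le_compat; try nra. }
  replace (v1 h - u1 - h / (2 * D)) with ((h * r1 / (r1 - 1) - 1 / a - h / 2) / dh + (1 / a + h / 2) * (1 / dh - 1 / D)).
  2:{ unfold v1, u1. fold a D r1 dh. field. repeat split; lra. }
  eapply Rle_trans. apply Rabs_triang. unfold Rdiv at 1. rewrite !Rabs_mult.
  rewrite (Rabs_pos_eq (/ dh)) by (left; apply Rinv_0_lt_compat; lra).
  rewrite (Rabs_pos_eq (1 / a + h / 2)) by (assert (0 < 1 / a) by (apply Rdiv_lt_0_compat; lra); lra).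
  unfold Kdel. fold a D.
  assert (/ dh <= / D) by (apply Rinv_le_contravar; lra).
  assert (0 <= 3 * s * Kn / (2 * a * (D - mu))).
  { unfold Kn. fold a D Ka. apply Rmult_le_pos. assert (0 <= a ^ 3) by (apply pow_le; lra). nra.
    left; apply Rinv_0_lt_compat; nra. }
  assert (1 / a + h / 2 <= 1 / a + 1 / 2) by lra.
  assert (0 <= q ^ 2 * h ^ 2 / (2 * D ^ 3)) by (apply Rmult_le_pos; [apply Rmult_le_pos; apply pow_le; lra| left; apply Rinv_0_lt_compat; apply Rmult_lt_0_compat; [lra|apply pow_lt; lra]]).
  assert (0 < 1 / a) by (apply Rdiv_lt_0_compat; lra).
  rewrite (Rmult_plus_distr_r _ _ (h ^ 2)). apply Rplus_le_compat.
  - apply Rle_trans with (3 * s * Kn / (2 * a * (D - mu)) * h ^ 2 * / D).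
    apply Rmult_le_compat; auto using Rabs_pos. left; apply Rinv_0_lt_compat; lra.
    right. field. lra.
  - apply Rle_trans with ((1 / a + 1 / 2) * (q ^ 2 * h ^ 2 / (2 * D ^ 3))).
    apply Rmult_le_compat; auto using Rabs_pos; lra.
    right. field. lra.
Qed.
End E4.

Lemma pow_diff A B M k : 1 <= M -> 0 <= A <= M -> 0 <= B <= M ->
  Rabs (A ^ k - B ^ k) <= INR k * Rabs (A - B) * M ^ k.
Proof.
  intros HM HA HB. induction k.
  - simpl. rewrite Rminus_diag, Rabs_R0. lra.
  - replace (A ^ S k - B ^ S k) with (A * (A ^ k - B ^ k) + B ^ k * (A - B)) by (simpl; ring).
    eapply Rle_trans. apply Rabs_triang. rewrite !Rabs_mult.
    rewrite (Rabs_pos_eq A), (Rabs_pos_eq (B ^ k)) by (try lra; apply pow_le; lra).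
    assert (B ^ k <= M ^ k) by (apply pow_incr; lra).
    assert (M ^ k <= M ^ S k) by (simpl; assert (0 <= M ^ k) by (apply pow_le; lra); nra).
    assert (0 <= M ^ k) by (apply pow_le; lra).
    pose proof (Rabs_pos (A - B)). pose proof (Rabs_pos (A ^ k - B ^ k)). pose proof (pos_INR k).
    rewrite S_INR. simpl (M ^ S k) in *.
    assert (A * Rabs (A ^ k - B ^ k) <= M * (INR k * Rabs (A - B) * M ^ k)) by (apply Rmult_le_compat; lra).
    assert (B ^ k * Rabs (A - B) <= M * M ^ k * Rabs (A - B)) by (apply Rmult_le_compat_r; lra).
    nra.
Qed.

Lemma pow_exp_bound t n : 0 <= t -> (1 + t) ^ n <= exp (INR n * t).
Proof.
  intros Ht. rewrite <- exp_powR. apply pow_incr. split. lra. apply exp_ineq1_le.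
Qed.

Section E5.
Variables s mu q : R.
Hypothesis Hs : 0 < s.
Hypothesis Hq : 0 < q.
Let a := alpha_plus s mu q.
Let b := alpha_minus s mu q.
Let D := Dd s mu q.

Lemma master : exists Km, 0 <= Km /\ forall h (k : nat), 0 < h < h0 s mu q -> INR k * h * h ^ 2 <= 1 ->
  Rabs (q * (u1 s mu q * exp (a * (INR k * h)) - u2 s mu q * exp (b * (INR k * h))
             - v1 s mu q h * R1 s mu q h ^ k + v2 s mu q h * R2 s mu q h ^ k)
        + q * h * (exp (a * (INR k * h)) - exp (b * (INR k * h))) / (2 * D))
  <= Km * (h ^ 2 * (1 + INR k * h) * exp (a * (INR k * h))).
Proof.
  set (Ka := 36 * Ca s mu q / (D + mu)). set (Kb := 12 * Cb s mu q / (D - mu)).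
  pose proof (Dd_gt_mu s mu q Hs Hq) as HDm. fold D in HDm.
  pose proof (Rle_abs mu). pose proof (Rle_abs (- mu)). rewrite Rabs_Ropp in H0.
  assert (HD : 0 < D) by (apply Dd_pos; auto).
  assert (Ha : 0 < a) by (apply ap_pos; auto). assert (Hb : b < 0) by (apply am_neg; auto).
  assert (HKa : 0 <= Ka).
  { unfold Ka, Ca. pose proof (Rabs_pos mu). pose proof (Rabs_pos (alpha_plus s mu q)).
    assert (0 <= Rabs (alpha_plus s mu q) ^ 3) by (apply pow_le; lra). assert (0 <= Rabs (alpha_plus s mu q) ^ 4) by (apply pow_le; lra).
    apply Rmult_le_pos. nra. left; apply Rinv_0_lt_compat; lra. }
  assert (HKb : 0 <= Kb).
  { unfold Kb, Cb. pose proof (Rabs_pos mu). pose proof (Rabs_pos (alpha_minus s mu q)).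
    assert (0 <= Rabs (alpha_minus s mu q) ^ 3) by (apply pow_le; lra). assert (0 <= Rabs (alpha_minus s mu q) ^ 4) by (apply pow_le; lra).
    apply Rmult_le_pos. nra. left; apply Rinv_0_lt_compat; lra. }
  set (e1 := Ka * exp Ka). set (e2 := Kb * exp Kb).
  assert (He1 : 0 <= e1) by (unfold e1; pose proof (exp_pos Ka); nra).
  assert (He2 : 0 <= e2) by (unfold e2; pose proof (exp_pos Kb); nra).
  assert (HKd : 0 <= Kdel s mu q).
  { assert (h0 s mu q / 2 < h0 s mu q /\ 0 < h0 s mu q / 2) by (pose proof (h0_pos s mu q Hs Hq); lra).
    pose proof (delta_est s mu q Hs Hq (h0 s mu q / 2) ltac:(lra)). pose proof (Rabs_pos (v1 s mu q (h0 s mu q / 2) - u1 s mu q - h0 s mu q / 2 / (2 * Dd s mu q))).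
    assert (0 < (h0 s mu q / 2) ^ 2) by (apply pow_lt; lra). nra. }
  set (U1 := Rabs (u1 s mu q)). set (U2 := Rabs (u2 s mu q)).
  assert (0 <= U1) by apply Rabs_pos. assert (0 <= U2) by apply Rabs_pos.
  exists (q * (U1 * e1 + U2 * e2 + Kdel s mu q * (1 + e1 + e2) + (e1 + e2) / (2 * D))).
  split.
  { apply Rmult_le_pos. lra. assert (0 <= (e1 + e2) / (2 * D)) by (apply Rmult_le_pos; [lra|left; apply Rinv_0_lt_compat; lra]).
    assert (0 <= U1 * e1) by nra. assert (0 <= U2 * e2) by nra. assert (0 <= Kdel s mu q * (1 + e1 + e2)) by nra. lra. }
  intros h k Hh Hk.
  destruct (basic s mu q Hs Hq h Hh) as [A [[B1 B2] [[C1 C2] [E [F G]]]]].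
  fold a in E. fold b in F.
  set (x := INR k * h) in *.
  assert (Hx : 0 <= x) by (unfold x; pose proof (pos_INR k); nra).
  assert (Hkh3 : INR k * h ^ 3 = x * h ^ 2) by (unfold x; ring).
  assert (Hxh : x * h ^ 2 <= 1) by (rewrite <- Hkh3; replace (INR k * h ^ 3) with (INR k * h * h ^ 2) by ring; auto).
  assert (Hh2 : 0 <= h ^ 2) by (apply pow_le; lra).
  set (ea := exp (a * x)). set (eb := exp (b * x)).
  assert (Hea : 1 <= ea) by (unfold ea; rewrite <- exp_0; apply exp_le; nra).
  assert (Heb : 0 < eb <= 1) by (unfold eb; split; [apply exp_pos| rewrite <- exp_0; apply exp_le; nra]).
  assert (Heab : eb <= ea) by lra.
  set (r1 := R1 s mu q h). set (r2 := R2 s mu q h).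
  assert (Hr1 : 1 < r1) by (apply R1_gt1; lra). assert (Hr2 : 0 < r2) by (apply R2_pos; lra).
  pose proof (root_a s mu q Hs Hq h Hh) as Hra. pose proof (root_b s mu q Hs Hq h Hh) as Hrb.
  fold a D Ka r1 in Hra. fold b D Kb r2 in Hrb.
  assert (Hh3 : 0 <= h ^ 3) by (apply pow_le; lra).
  set (X1 := ea - r1 ^ k).
  assert (HX1 : Rabs X1 <= e1 * (x * h ^ 2) * ea).
  { set (E1 := exp (a * h)).
    assert (HE1 : 1 <= E1) by (unfold E1; rewrite <- exp_0; apply exp_le; nra).
    assert (Eea : ea = E1 ^ k) by (unfold ea, E1, x; rewrite exp_powR; f_equal; ring).
    set (M1 := E1 * (1 + Ka * h ^ 3)).
    assert (0 <= Ka * h ^ 3) by nra.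
    assert (HM1 : 1 <= M1) by (unfold M1; nra).
    assert (Rabs (E1 - r1) <= Ka * h ^ 3) by auto.
    assert (r1 <= M1) by (unfold M1; pose proof (Rle_abs (r1 - E1)) as Hq1; rewrite Rabs_minus_sym in Hq1; nra).
    assert (E1 <= M1) by (unfold M1; nra).
    pose proof (pow_diff E1 r1 M1 k HM1 ltac:(lra) ltac:(lra)) as PD.
    unfold X1. rewrite Eea at 1.
    assert (M1 ^ k <= ea * exp Ka).
    { unfold M1. rewrite Rpow_mult_distr, <- Eea. apply Rmult_le_compat_l. lra.
      eapply Rle_trans. apply pow_exp_bound; auto. apply exp_le.
      replace (INR k * (Ka * h ^ 3)) with (Ka * (INR k * h ^ 3)) by ring. rewrite Hkh3. nra. }
    eapply Rle_trans. exact PD.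
    assert (0 <= INR k * Rabs (E1 - r1)) by (apply Rmult_le_pos; [apply pos_INR|apply Rabs_pos]).
    assert (INR k * Rabs (E1 - r1) <= Ka * (x * h ^ 2)).
    { rewrite <- Hkh3. replace (Ka * (INR k * h ^ 3)) with (INR k * (Ka * h ^ 3)) by ring.
      apply Rmult_le_compat_l; auto. apply pos_INR. }
    assert (0 <= M1 ^ k) by (apply pow_le; lra).
    apply Rle_trans with (Ka * (x * h ^ 2) * (ea * exp Ka)). apply Rmult_le_compat; auto.
    unfold e1. right; ring. }
  set (X2 := eb - r2 ^ k).
  assert (HX2 : Rabs X2 <= e2 * (x * h ^ 2)).
  { set (E2 := exp (b * h)).
    assert (HE2 : 0 < E2 <= 1) by (unfold E2; split; [apply exp_pos|rewrite <- exp_0; apply exp_le; nra]).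
    assert (Eeb : eb = E2 ^ k) by (unfold eb, E2, x; rewrite exp_powR; f_equal; ring).
    set (M2 := 1 + Kb * h ^ 3).
    assert (0 <= Kb * h ^ 3) by nra.
    assert (HM2 : 1 <= M2) by (unfold M2; nra).
    assert (Rabs (E2 - r2) <= Kb * h ^ 3) by auto.
    assert (r2 <= M2) by (unfold M2; pose proof (Rle_abs (r2 - E2)) as Hq1; rewrite Rabs_minus_sym in Hq1; nra).
    assert (E2 <= M2) by (unfold M2; nra).
    pose proof (pow_diff E2 r2 M2 k HM2 ltac:(lra) ltac:(lra)) as PD.
    unfold X2. rewrite Eeb at 1.
    assert (M2 ^ k <= exp Kb).
    { unfold M2. eapply Rle_trans. apply pow_exp_bound; auto. apply exp_le.
      replace (INR k * (Kb * h ^ 3)) with (Kb * (INR k * h ^ 3)) by ring. rewrite Hkh3. nra. }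
    eapply Rle_trans. exact PD.
    assert (0 <= INR k * Rabs (E2 - r2)) by (apply Rmult_le_pos; [apply pos_INR|apply Rabs_pos]).
    assert (INR k * Rabs (E2 - r2) <= Kb * (x * h ^ 2)).
    { rewrite <- Hkh3. replace (Kb * (INR k * h ^ 3)) with (INR k * (Kb * h ^ 3)) by ring.
      apply Rmult_le_compat_l; auto. apply pos_INR. }
    assert (0 <= M2 ^ k) by (apply pow_le; lra).
    apply Rle_trans with (Kb * (x * h ^ 2) * exp Kb). apply Rmult_le_compat; auto.
    unfold e2. right; ring. }
  set (dl := v1 s mu q h - u1 s mu q).
  assert (Hdl2 : v2 s mu q h - u2 s mu q = dl).
  { unfold dl. pose proof (u_diff s mu q Hs Hq). pose proof (v_diff s mu q Hs Hq h Hh). lra. }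
  pose proof (delta_est s mu q Hs Hq h Hh) as Hdel. fold D in Hdel. fold dl in Hdel.
  set (Y := r1 ^ k - r2 ^ k).
  set (Ee := ea - eb).
  assert (HY : Y = Ee - X1 + X2) by (unfold Y, Ee, X1, X2; ring).
  assert (HEe : 0 <= Ee <= ea) by (unfold Ee; lra).
  assert (Hpp : 0 <= h ^ 2 * (1 + x)) by nra.
  assert (HxP : x * h ^ 2 <= h ^ 2 * (1 + x) * ea).
  { assert (0 <= h ^ 2 * (1 + x) * (ea - 1)) by (apply Rmult_le_pos; lra). nra. }
  assert (HxPa : x * h ^ 2 * ea <= h ^ 2 * (1 + x) * ea) by nra.
  assert (HPa : h ^ 2 * ea <= h ^ 2 * (1 + x) * ea) by nra.
  assert (HY2 : Rabs Y <= (1 + e1 + e2) * ea).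
  { rewrite HY. unfold Rminus. eapply Rle_trans. apply Rabs_triang. eapply Rle_trans. apply Rplus_le_compat_r. apply Rabs_triang.
    rewrite Rabs_Ropp, (Rabs_pos_eq Ee) by lra.
    assert (e1 * (x * h ^ 2) * ea <= e1 * ea) by (apply Rmult_le_compat_r; [lra|]; nra).
    assert (e2 * (x * h ^ 2) <= e2 * ea) by nra. nra. }
  replace (q * (u1 s mu q * ea - u2 s mu q * eb - v1 s mu q h * r1 ^ k + v2 s mu q h * r2 ^ k) + q * h * Ee / (2 * D))
    with (q * (u1 s mu q * X1 - u2 s mu q * X2 - (dl - h / (2 * D)) * Y - h / (2 * D) * (X2 - X1))).
  2:{ unfold X1, X2, Y, Ee. replace (v1 s mu q h) with (u1 s mu q + dl) by (unfold dl; ring).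
      replace (v2 s mu q h) with (u2 s mu q + dl) by lra. field. lra. }
  rewrite Rabs_mult, (Rabs_pos_eq q) by lra. rewrite Rmult_assoc. apply Rmult_le_compat_l. lra.
  set (P := h ^ 2 * (1 + x) * ea) in *.
  assert (T1 : Rabs (u1 s mu q * X1) <= U1 * e1 * P).
  { rewrite Rabs_mult. fold U1. apply Rle_trans with (U1 * (e1 * (x * h ^ 2) * ea)).
    apply Rmult_le_compat_l; auto. replace (U1 * e1 * P) with (U1 * (e1 * P)) by ring. apply Rmult_le_compat_l; auto.
    replace (e1 * (x * h ^ 2) * ea) with (e1 * (x * h ^ 2 * ea)) by ring. apply Rmult_le_compat_l; auto. }
  assert (T2 : Rabs (u2 s mu q * X2) <= U2 * e2 * P).
  { rewrite Rabs_mult. fold U2. apply Rle_trans with (U2 * (e2 * (x * h ^ 2))).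
    apply Rmult_le_compat_l; auto. replace (U2 * e2 * P) with (U2 * (e2 * P)) by ring. apply Rmult_le_compat_l; auto. apply Rmult_le_compat_l; auto. }
  assert (T3 : Rabs ((dl - h / (2 * D)) * Y) <= Kdel s mu q * (1 + e1 + e2) * P).
  { rewrite Rabs_mult. apply Rle_trans with (Kdel s mu q * h ^ 2 * ((1 + e1 + e2) * ea)).
    apply Rmult_le_compat; auto using Rabs_pos.
    replace (Kdel s mu q * h ^ 2 * ((1 + e1 + e2) * ea)) with (Kdel s mu q * (1 + e1 + e2) * (h ^ 2 * ea)) by ring.
    apply Rmult_le_compat_l; auto. nra. }
  assert (T4 : Rabs (h / (2 * D) * (X2 - X1)) <= (e1 + e2) / (2 * D) * P).
  { rewrite Rabs_mult, Rabs_pos_eq by (apply Rmult_le_pos; [lra|left; apply Rinv_0_lt_compat; lra]).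
    assert (Rabs (X2 - X1) <= (e1 + e2) * P).
    { unfold Rminus. eapply Rle_trans. apply Rabs_triang. rewrite Rabs_Ropp.
      assert (e2 * (x * h ^ 2) <= e2 * P) by (apply Rmult_le_compat_l; auto).
      assert (e1 * (x * h ^ 2) * ea <= e1 * P) by (rewrite Rmult_assoc; apply Rmult_le_compat_l; auto).
      lra. }
    apply Rle_trans with (1 / (2 * D) * ((e1 + e2) * P)).
    apply Rmult_le_compat; auto using Rabs_pos. apply Rmult_le_pos; [lra|left; apply Rinv_0_lt_compat; lra].
    apply Rmult_le_compat_r; [left; apply Rinv_0_lt_compat; lra | lra]. right; field; lra. }
  unfold Rminus. eapply Rle_trans. apply Rabs_triang. eapply Rle_trans. apply Rplus_le_compat_r. apply Rabs_triang.
  eapply Rle_trans. apply Rplus_le_compat_r. apply Rplus_le_compat_r. apply Rabs_triang.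
  rewrite !Rabs_Ropp. fold (Rminus (dl) (h / (2 * D))). fold (Rminus X2 X1).
  assert (0 <= P) by (unfold P; nra).
  replace ((U1 * e1 + U2 * e2 + Kdel s mu q * (1 + e1 + e2) + (e1 + e2) / (2 * D)) * P) with
    (U1 * e1 * P + U2 * e2 * P + Kdel s mu q * (1 + e1 + e2) * P + (e1 + e2) / (2 * D) * P) by ring.
  lra.
Qed.
End E5.

Lemma DeltaZ_formula s mu q W Wh h (k : nat) : 0 < s -> 0 < q -> is_scale_W s mu q W ->
  0 < h < h0 s mu q -> is_scale_Wh s mu q h Wh ->
  DeltaZ q W Wh (INR k * h) h =
  q * (u1 s mu q * exp (alpha_plus s mu q * (INR k * h)) - u2 s mu q * exp (alpha_minus s mu q * (INR k * h))
       - v1 s mu q h * R1 s mu q h ^ k + v2 s mu q h * R2 s mu q h ^ k).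
Proof.
  intros Hs Hq HW Hh HWh.
  destruct (basic s mu q Hs Hq h Hh) as [A [[B1 B2] [[C1 C2] [E [F G]]]]].
  assert (Hx : 0 <= INR k * h) by (pose proof (pos_INR k); nra).
  unfold DeltaZ, Zq, Zqh.
  rewrite (W_int s mu q W Hs Hq HW _ Hx).
  replace (INR k * h / h) with (INR k) by (field; lra). rewrite Int_part_INR.
  pose proof HWh as HWh'. destruct HWh' as [_ [Hstep _]].
  destruct (step_int h Wh (proj1 Hh) Hstep (fun _ => 1) k (C0_const 1)) as [Hex Hint].
  assert (Hex' : ex_RInt Wh 0 (INR k * h)).
  { apply (ex_RInt_ext (V:=R_NormedModule) (fun y => 1 * Wh y)); auto. intros; toR; ring. }
  rewrite Rint_RInt by exact Hex'.
  rewrite (RInt_extR Wh (fun y => 1 * Wh y)) by (intros; ring). rewrite Hint.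
  rewrite (sumN_ext _ (fun j => h * vv s mu q h j)).
  2:{ intros j _. rewrite (Wh_explicit s mu q h) by (auto; lra). rewrite RInt_constR. ring. }
  rewrite sumN_scal.
  assert (Hr1 : 1 < R1 s mu q h) by (apply R1_gt1; lra).
  assert (Hr2 : 0 < R2 s mu q h) by (apply R2_pos; lra).
  assert (Hr2' : R2 s mu q h < 1).
  { pose proof (one_m_R2 s mu q Hs Hq h Hh). pose proof (Dd_gt_mu s mu q Hs Hq). pose proof (Rle_abs (- mu)).
    rewrite Rabs_Ropp in H1. assert (0 < h * (Dd s mu q + mu) / (3 * s)) by (apply Rdiv_lt_0_compat; nra). lra. }
  assert (Hdh : 0 < Dh s mu q h) by (apply Dh_pos; lra).
  rewrite (sumN_ext _ (fun j => / Dh s mu q h * (R1 s mu q h * R1 s mu q h ^ j) + (- / Dh s mu q h) * (R2 s mu q h * R2 s mu q h ^ j))).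
  2:{ intros j _. unfold vv. simpl. field. lra. }
  rewrite sumN_plus, !sumN_scal, !sumN_geom by lra.
  pose proof (u_diff s mu q Hs Hq) as Hu. pose proof (v_diff s mu q Hs Hq h Hh) as Hv.
  pose proof (ap_pos s mu q Hs Hq). pose proof (am_neg s mu q Hs Hq). pose proof (Dd_pos s mu q Hs Hq).
  assert (Ei : ((exp (alpha_plus s mu q * (INR k * h)) - 1) / alpha_plus s mu q -
      (exp (alpha_minus s mu q * (INR k * h)) - 1) / alpha_minus s mu q) / Dd s mu q
      = u1 s mu q * exp (alpha_plus s mu q * (INR k * h)) - u2 s mu q * exp (alpha_minus s mu q * (INR k * h)) - (u1 s mu q - u2 s mu q)).
  { unfold u1, u2. field. repeat split; lra. }
  assert (Ed : h * (/ Dh s mu q h * (R1 s mu q h * ((1 - R1 s mu q h ^ k) / (1 - R1 s mu q h))) +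
             - / Dh s mu q h * (R2 s mu q h * ((1 - R2 s mu q h ^ k) / (1 - R2 s mu q h))))
      = v1 s mu q h * R1 s mu q h ^ k - v2 s mu q h * R2 s mu q h ^ k - (v1 s mu q h - v2 s mu q h)).
  { unfold v1, v2. field. repeat split; lra. }
  rewrite Ei, Ed, Hu, Hv. field. lra.
Qed.

Theorem proposition5p6 (sigma2 mu q : R) (Hs : 0 < sigma2) (Hq : 0 < q)
  (W : R -> R) (HW : is_scale_W sigma2 mu q W) :
  (exists A0 h0, 0 < A0 /\ 0 < h0 /\
     forall (h : R) (Wh : R -> R), 0 < h < h0 -> is_scale_Wh sigma2 mu q h Wh ->
     forall k : nat, (1 <= k)%nat -> INR k * h * h ^ 2 <= 1 ->
       Rabs (DeltaZ q W Wh (INR k * h) h) <=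
       A0 * (h ^ 2 * (1 + INR k * h) * exp (alpha_plus sigma2 mu q * (INR k * h))
             + h * (exp (alpha_plus sigma2 mu q * (INR k * h))
                    - exp (alpha_minus sigma2 mu q * (INR k * h)))))
  /\
  (forall (hs : nat -> R) (Wh : nat -> R -> R),
     (forall n, 0 < hs n) ->
     Un_cv hs 0 ->
     (forall n, exists m : nat, hs n = INR m * hs (S n)) ->
     (exists N, forall n, (N <= n)%nat -> is_scale_Wh sigma2 mu q (hs n) (Wh n)) ->
     forall x : R, (exists (n k : nat), (1 <= k)%nat /\ x = INR k * hs n) ->
     Un_cv (fun n => DeltaZ q W (Wh n) x (hs n) / hs n)
       (- (1 / 2) * (q / sqrt (mu ^ 2 + 2 * sigma2 * q))
        * (exp (alpha_plus sigma2 mu q * x) - exp (alpha_minus sigma2 mu q * x)))).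
Proof.
  destruct (master sigma2 mu q Hs Hq) as [Km [HKm Hm]].
  set (a := alpha_plus sigma2 mu q) in *. set (b := alpha_minus sigma2 mu q) in *.
  set (D := Dd sigma2 mu q) in *.
  assert (HD : 0 < D) by (apply Dd_pos; auto).
  assert (Ha : 0 < a) by (apply ap_pos; auto). assert (Hb : b < 0) by (apply am_neg; auto).
  pose proof (h0_pos sigma2 mu q Hs Hq) as Hh0.
  split.
  - exists (Km + q / (2 * D) + 1), (h0 sigma2 mu q).
    assert (Hqd : 0 < q / (2 * D)) by (apply Rdiv_lt_0_compat; lra).
    split. lra. split. auto.
    intros h Wh Hh HWh k Hk Hkh.
    rewrite (DeltaZ_formula sigma2 mu q W Wh h k Hs Hq HW Hh HWh). fold a b.
    specialize (Hm h k Hh Hkh). fold D in Hm.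
    set (x := INR k * h) in *.
    assert (Hx : 0 <= x) by (unfold x; pose proof (pos_INR k); nra).
    set (Z := q * (u1 sigma2 mu q * exp (a * x) - u2 sigma2 mu q * exp (b * x) - v1 sigma2 mu q h * R1 sigma2 mu q h ^ k +
             v2 sigma2 mu q h * R2 sigma2 mu q h ^ k)) in *.
    set (E := exp (a * x) - exp (b * x)).
    assert (HE : 0 <= E) by (unfold E; assert (exp (b * x) <= exp (a * x)) by (apply exp_le; nra); lra).
    fold E in Hm.
    set (P := h ^ 2 * (1 + x) * exp (a * x)) in *.
    assert (HP : 0 <= P) by (unfold P; pose proof (exp_pos (a * x)); assert (0 <= h ^ 2) by (apply pow_le; lra); apply Rmult_le_pos; [apply Rmult_le_pos|]; lra).
    assert (Hqh : 0 <= q * h * E / (2 * D)) by (apply Rmult_le_pos; [apply Rmult_le_pos; [apply Rmult_le_pos|]; lra| left; apply Rinv_0_lt_compat; lra]).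
    replace Z with ((Z + q * h * E / (2 * D)) - q * h * E / (2 * D)) by ring.
    eapply Rle_trans. apply Rabs_triang. rewrite Rabs_Ropp, (Rabs_pos_eq (q * h * E / (2 * D))) by lra.
    replace (q * h * E / (2 * D)) with (q / (2 * D) * (h * E)) in * by (field; lra).
    assert (0 <= h * E) by nra.
    assert (Km * P <= (Km + q / (2 * D) + 1) * P) by nra.
    assert (q / (2 * D) * (h * E) <= (Km + q / (2 * D) + 1) * (h * E)) by nra.
    nra.
  - intros hs Wh Hpos Hcv Hnest [N HN] x [n0 [k0 [Hk0 Hx]]].
    assert (Hmult : forall d, exists k : nat, (1 <= k)%nat /\ x = INR k * hs (n0 + d)%nat).
    { induction d. exists k0. rewrite Nat.add_0_r. auto.
      destruct IHd as [k [Hk Hxk]]. destruct (Hnest (n0 + d)%nat) as [m Hm'].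
      assert (m <> O). { intro. subst. simpl in Hm'. pose proof (Hpos (n0 + d)%nat). lra. }
      exists (k * m)%nat. split. lia. rewrite Hxk, Hm', mult_INR. rewrite Nat.add_succ_r. ring. }
    assert (Hxpos : 0 < x). { rewrite Hx. pose proof (Hpos n0). assert (1 <= INR k0) by (apply (le_INR 1); auto). nra. }
    replace (mu ^ 2 + 2 * sigma2 * q) with (mu ^ 2 + 2 * q * sigma2) by ring. change (sqrt (mu ^ 2 + 2 * q * sigma2)) with D.
    set (E := exp (a * x) - exp (b * x)).
    intros eps Heps.
    set (C := Km * (1 + x) * exp (a * x) + 1).
    assert (HC : 0 < C) by (unfold C; pose proof (exp_pos (a * x)); assert (0 <= Km * (1 + x) * exp (a * x)) by (apply Rmult_le_pos; [apply Rmult_le_pos|]; lra); lra).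
    set (dlt := Rmin (Rmin (h0 sigma2 mu q / 2) (1 / (x + 1))) (eps / C)).
    assert (Hdlt : 0 < dlt).
    { unfold dlt. repeat apply Rmin_pos; try apply Rdiv_lt_0_compat; lra. }
    destruct (Hcv dlt Hdlt) as [N1 HN1].
    exists (max (max N N1) n0). intros n Hn.
    specialize (HN1 n ltac:(lia)). unfold R_dist in HN1. rewrite Rminus_0_r, Rabs_pos_eq in HN1 by (left; apply Hpos).
    set (h := hs n) in *.
    assert (Hh1 : h < h0 sigma2 mu q).
    { assert (dlt <= h0 sigma2 mu q / 2) by (unfold dlt; eapply Rle_trans; apply Rmin_l). lra. }
    assert (Hh2 : h < 1 / (x + 1)).
    { assert (dlt <= 1 / (x + 1)) by (unfold dlt; eapply Rle_trans; [apply Rmin_l|apply Rmin_r]). lra. }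
    assert (Hh3 : h < eps / C) by (assert (dlt <= eps / C) by apply Rmin_r; lra).
    assert (Hhp : 0 < h) by apply Hpos.
    destruct (Hmult (n - n0)%nat) as [k [Hk Hxk]]. replace (n0 + (n - n0))%nat with n in Hxk by lia.
    fold h in Hxk.
    assert (HWh : is_scale_Wh sigma2 mu q h (Wh n)) by (apply HN; lia).
    assert (Hxh : x * h < 1).
    { apply Rmult_lt_compat_l with (r := x) in Hh2; auto.
      replace (x * (1 / (x + 1))) with (x / (x + 1)) in Hh2 by (field; lra).
      assert (x / (x + 1) < 1). { apply Rmult_lt_reg_r with (x + 1). lra. unfold Rdiv. rewrite Rmult_assoc, Rinv_l by lra. lra. }
      lra. }
    assert (Hh1' : h <= 1). { assert (1 / (x + 1) <= 1). { apply Rmult_le_reg_r with (x + 1). lra. unfold Rdiv. rewrite Rmult_1_l, Rinv_l by lra. lra. } lra. }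
    assert (Hkh : INR k * h * h ^ 2 <= 1).
    { rewrite <- Hxk. assert (x * h ^ 2 <= x * h) by (simpl; rewrite Rmult_1_r; apply Rmult_le_compat_l; [lra|nra]). lra. }
    specialize (Hm h k ltac:(lra) Hkh). fold D in Hm. rewrite <- Hxk in Hm.
    unfold R_dist. rewrite Hxk. rewrite (DeltaZ_formula sigma2 mu q W (Wh n) h k Hs Hq HW ltac:(lra) HWh).
    rewrite <- Hxk. fold a b.
    set (Z := q * (u1 sigma2 mu q * exp (a * x) - u2 sigma2 mu q * exp (b * x) - v1 sigma2 mu q h * R1 sigma2 mu q h ^ k +
             v2 sigma2 mu q h * R2 sigma2 mu q h ^ k)) in *.
    fold E. fold E in Hm.
    replace (Z / h - - (1 / 2) * (q / D) * E) with ((Z + q * h * E / (2 * D)) / h) by (field; lra).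
    unfold Rdiv at 1. rewrite Rabs_mult, (Rabs_pos_eq (/ h)) by (left; apply Rinv_0_lt_compat; lra).
    apply Rle_lt_trans with (Km * (h ^ 2 * (1 + x) * exp (a * x)) * / h).
    apply Rmult_le_compat_r; auto. left; apply Rinv_0_lt_compat; lra.
    replace (Km * (h ^ 2 * (1 + x) * exp (a * x)) * / h) with (h * (Km * (1 + x) * exp (a * x))) by (field; lra).
    apply Rle_lt_trans with (h * C). apply Rmult_le_compat_l; [lra|unfold C; lra].
    apply Rmult_lt_compat_r with (r := C) in Hh3; auto.
    replace (eps / C * C) with eps in Hh3 by (field; lra). lra.
Qed.
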